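(* Let $x_{1:n}\in\mathcal X^n$ ($n\ge1$) have used alphabet size $m$ and counts $n_j$. Let $\beta^*:=m/\ln\frac nm$ if $m<n$, and if $m=n$ let $\beta^*=\infty$, where $S^\infty$ is defined by $S^\infty(x_{t+1}=i\mid x_{1:t})=w^t_i$ if $n^t_i=0$ and $0$ if $n^t_i>0$. Then $$R^{\beta^*}_S(x_{1:n}) \le \mathrm{CL}_w(\mathcal A) - \big(m-\tfrac12\big)\ln m + \sum_{j\in\mathcal A}\tfrac12\ln n_j - \tfrac12\ln n + m\ln\ln\frac{e\,n}{m} + 0.56\,m + 0.082 .$$
   Context: Let $\mathcal X$ be a finite base alphabet. For $x_{1:n}\in\mathcal X^n$, let $n_i$ be the number of occurrences of $i$ in $x_{1:n}$, $\mathcal A=\{x_1,\dots,x_n\}$, $m=|\mathcal A|$. For $0\le t\le n$ let $\mathcal A_t=\{x_1,\dots,x_t\}$ ($\mathcal A_0=\emptyset$), $n^t_i$ the number of occurrences of $i$ in $x_{1:t}$. New-symbol weights: for each $t$ and $i\in\mathcal X\setminus\mathcal A_t$ a number $w^t_i>0$ with $\sum_{k\in\mathcal X\setminus\mathcal A_t}w^t_k\le1$. For constant $\beta>0$, $S^\beta(x_{t+1}=i\mid x_{1:t})=n^t_i/(t+\beta)$ if $n^t_i>0$ and $\beta w^t_i/(t+\beta)$ if $n^t_i=0$; $S^\beta(x_{1:n})=\prod_{t=0}^{n-1}S^\beta(x_{t+1}\mid x_{1:t})$. $\mathrm{CL}_w(\mathcal A):=\sum_{t\in\{0,\dots,n-1\}:\,x_{t+1}\notin\mathcal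 A_t}\ln(1/w^t_{x_{t+1}})$. Redundancy $R^\beta_S(x_{1:n}):=\ln\big(n^{-n}\prod_{j\in\mathcal A}n_j^{n_j}\big)-\ln S^\beta(x_{1:n})$. Natural logarithms; $e$ is Euler's number. *)

(* Defs.v *)
From Stdlib Require Import Reals List Arith.
Import ListNotations.
Open Scope R_scope.

(* Alphabet X = {0, ..., K-1}; a sequence x_{1:n} is a list of length n.
   Index t (0-based position) holds the symbol x_{t+1}. *)

Definition rsum (l : list nat) (f : nat -> R) : R :=
  fold_right (fun a acc => f a + acc) 0 l.
Definition rprod (l : list nat) (f : nat -> R) : R :=
  fold_right (fun a acc => f a * acc) 1 l.

Definition cnt (x : list nat) (t i : nat) : nat :=
  count_occ Nat.eq_dec (firstn t x) i.

Definition sym (x : list nat) (t : nat) : nat := nth t x 0%nat.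

Definition nocc (x : list nat) (i : nat) : nat := cnt x (length x) i.

Definition usedA (K : nat) (x : list nat) : list nat :=
  filter (fun i => Nat.ltb 0 (nocc x i)) (seq 0 K).
Definition msize (K : nat) (x : list nat) : nat := length (usedA K x).

Definition valid_weights (K : nat) (x : list nat) (w : nat -> nat -> R) : Prop :=
  forall t, (t <= length x)%nat ->
    (forall i, (i < K)%nat -> cnt x t i = 0%nat -> 0 < w t i) /\
    rsum (filter (fun i => Nat.eqb (cnt x t i) 0) (seq 0 K)) (w t) <= 1.

Definition S_cond (beta : R) (w : nat -> nat -> R) (x : list nat) (t i : nat) : R :=
  if Nat.ltb 0 (cnt x t i)
  then INR (cnt x t i) / (INR t + beta)
  else beta * w t i / (INR t + beta).

Definition S_beta (beta : R) (w : nat -> nat -> R) (x : list nat) : R :=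
  rprod (seq 0 (length x)) (fun t => S_cond beta w x t (sym x t)).

Definition S_inf_cond (w : nat -> nat -> R) (x : list nat) (t i : nat) : R :=
  if Nat.ltb 0 (cnt x t i) then 0 else w t i.

Definition S_inf (w : nat -> nat -> R) (x : list nat) : R :=
  rprod (seq 0 (length x)) (fun t => S_inf_cond w x t (sym x t)).

Definition ML_term (K : nat) (x : list nat) : R :=
  ln (/ (INR (length x)) ^ (length x) *
      rprod (usedA K x) (fun j => INR (nocc x j) ^ (nocc x j))).

Definition redundancy (K : nat) (beta : R) (w : nat -> nat -> R) (x : list nat) : R :=
  ML_term K x - ln (S_beta beta w x).
Definition redundancy_inf (K : nat) (w : nat -> nat -> R) (x : list nat) : R :=
  ML_term K x - ln (S_inf w x).

Definition CL (w : nat -> nat -> R) (x : list nat) : R :=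
  rsum (filter (fun t => Nat.eqb (cnt x t (sym x t)) 0) (seq 0 (length x)))
       (fun t => ln (1 / w t (sym x t))).

Definition theorem4_rhs (K : nat) (w : nat -> nat -> R) (x : list nat) : R :=
  let n := INR (length x) in
  let m := INR (msize K x) in
  CL w x - (m - 1/2) * ln m
  + rsum (usedA K x) (fun j => 1/2 * ln (INR (nocc x j)))
  - 1/2 * ln n
  + m * ln (ln (exp 1 * n / m))
  + 56/100 * m + 82/1000.

(* Main.v *)
Require Import Defs.
From Stdlib Require Import Reals List Arith Lra Lia Psatz.
From Coquelicot Require Coquelicot.
Import ListNotations.
Open Scope R_scope.

Module Num.
Import Coquelicot.Coquelicot.
Open Scope R_scope.

Lemma mono_deriv (g dg : R -> R) (a x : R) :
  a <= x ->
  (forall c, a <= c <= x -> is_derive g c (dg c)) ->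
  (forall c, a <= c <= x -> 0 <= dg c) -> g a <= g x.
Proof.
  intros Hax Hd Hp.
  destruct (Req_dec a x) as [->|Hne]; [lra|].
  assert (Hlt : a < x) by lra.
  destruct (MVT_cor2 g dg a x Hlt) as [c [Hc1 Hc2]].
  - intros c Hc. apply is_derive_Reals. apply Hd; lra.
  - assert (0 <= dg c) by (apply Hp; lra).
    assert (0 <= dg c * (x - a)) by (apply Rmult_le_pos; lra). lra.
Qed.

Lemma exp_mono x y : x <= y -> exp x <= exp y.
Proof. intros H; destruct H as [H|H]; [left; apply exp_increasing; auto | subst; lra]. Qed.

Lemma ln_mono x y : 0 < x -> x <= y -> ln x <= ln y.
Proof. intros Hx H; destruct H as [H|H]; [left; apply ln_increasing; auto | subst; lra]. Qed.

Lemma exp_ge1 x : 0 <= x -> 1 <= exp x.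
Proof. intros. rewrite <- exp_0. apply exp_mono; lra. Qed.

Lemma exp_le1 x : x <= 0 -> exp x <= 1.
Proof. intros. rewrite <- exp_0. apply exp_mono; lra. Qed.

Definition T1 x := 1 + x.
Definition T2 x := T1 x + x^2/2.
Definition T3 x := T2 x + x^3/6.
Definition T4 x := T3 x + x^4/24.
Definition T5 x := T4 x + x^5/120.
Definition T6 x := T5 x + x^6/720.


Lemma step_exp (T P : R -> R) : T 0 = 1 -> (forall c, is_derive T c (P c)) ->
  (forall c, 0 <= c -> P c <= exp c) -> forall x, 0 <= x -> T x <= exp x.
Proof.
  intros H0 Hd Hp x Hx.
  apply (mono_deriv (fun t => exp t - T t) (fun t => exp t - P t) 0 x) in Hx.
  - rewrite exp_0, H0 in Hx. lra.
  - intros c _. apply (is_derive_minus exp T). apply is_derive_Reals, derivable_pt_lim_exp. apply Hd.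
  - intros c Hc. specialize (Hp c ltac:(lra)). lra.
Qed.

Lemma exp_T1 : forall x, 0 <= x -> T1 x <= exp x.
Proof. apply (step_exp T1 (fun _ => 1)). unfold T1; ring. intros; unfold T1; auto_derive; auto; ring.
  intros; apply exp_ge1; lra. Qed.
Lemma exp_T2 : forall x, 0 <= x -> T2 x <= exp x.
Proof. apply (step_exp T2 T1). unfold T2,T1; field. intros; unfold T2,T1; auto_derive; auto; field.
  apply exp_T1. Qed.
Lemma exp_T3 : forall x, 0 <= x -> T3 x <= exp x.
Proof. apply (step_exp T3 T2). unfold T3,T2,T1; field. intros; unfold T3,T2,T1; auto_derive; auto; field.
  apply exp_T2. Qed.
Lemma exp_T4 : forall x, 0 <= x -> T4 x <= exp x.
Proof. apply (step_exp T4 T3). unfold T4,T3,T2,T1; field. intros; unfold T4,T3,T2,T1; auto_derive; auto; field.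
  apply exp_T3. Qed.
Lemma exp_T5 : forall x, 0 <= x -> T5 x <= exp x.
Proof. apply (step_exp T5 T4). unfold T5,T4,T3,T2,T1; field. intros; unfold T5,T4,T3,T2,T1; auto_derive; auto; field.
  apply exp_T4. Qed.
Lemma exp_T6 : forall x, 0 <= x -> T6 x <= exp x.
Proof. apply (step_exp T6 T5). unfold T6,T5,T4,T3,T2,T1; field. intros; unfold T6,T5,T4,T3,T2,T1; auto_derive; auto; field.
  apply exp_T5. Qed.

Definition U0 (x:R) := 1.
Definition U1 x := U0 x - x.
Definition U2 x := U1 x + x^2/2.
Definition U3 x := U2 x - x^3/6.
Definition U4 x := U3 x + x^4/24.
Definition U5 x := U4 x - x^5/120.

Lemma step_lo (U P : R -> R) : U 0 = 1 -> (forall c, is_derive U c (- P c)) ->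
  (forall c, 0 <= c -> exp (-c) <= P c) -> forall x, 0 <= x -> U x <= exp (-x).
Proof.
  intros H0 Hd Hp x Hx.
  apply (mono_deriv (fun t => exp (-t) - U t) (fun t => P t - exp (-t)) 0 x) in Hx.
  - rewrite Ropp_0, exp_0, H0 in Hx. lra.
  - intros c _. replace (P c - exp (-c)) with (- exp (-c) - - P c) by ring.
    apply (is_derive_minus (fun t => exp (-t)) U); [|apply Hd].
    auto_derive; auto; ring.
  - intros c Hc. specialize (Hp c ltac:(lra)). lra.
Qed.
Lemma step_hi (U P : R -> R) : U 0 = 1 -> (forall c, is_derive U c (- P c)) ->
  (forall c, 0 <= c -> P c <= exp (-c)) -> forall x, 0 <= x -> exp (-x) <= U x.
Proof.
  intros H0 Hd Hp x Hx.
  apply (mono_deriv (fun t => U t - exp (-t)) (fun t => exp (-t) - P t) 0 x) in Hx.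
  - rewrite Ropp_0, exp_0, H0 in Hx. lra.
  - intros c _. replace (exp (-c) - P c) with (- P c - - exp (-c)) by ring.
    apply (is_derive_minus U (fun t => exp (-t))); [apply Hd|].
    auto_derive; auto; ring.
  - intros c Hc. specialize (Hp c ltac:(lra)). lra.
Qed.

Ltac uu := unfold U5, U4, U3, U2, U1, U0.
Lemma expn_U0 : forall x, 0 <= x -> exp (-x) <= U0 x.
Proof. intros; uu; apply exp_le1; lra. Qed.
Lemma expn_U1 : forall x, 0 <= x -> U1 x <= exp (-x).
Proof. apply (step_lo U1 U0). uu; ring. intros; uu; auto_derive; auto; field. apply expn_U0. Qed.
Lemma expn_U2 : forall x, 0 <= x -> exp (-x) <= U2 x.
Proof. apply (step_hi U2 U1). uu; field. intros; uu; auto_derive; auto; field. apply expn_U1. Qed.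
Lemma expn_U3 : forall x, 0 <= x -> U3 x <= exp (-x).
Proof. apply (step_lo U3 U2). uu; field. intros; uu; auto_derive; auto; field. apply expn_U2. Qed.
Lemma expn_U4 : forall x, 0 <= x -> exp (-x) <= U4 x.
Proof. apply (step_hi U4 U3). uu; field. intros; uu; auto_derive; auto; field. apply expn_U3. Qed.
Lemma expn_U5 : forall x, 0 <= x -> U5 x <= exp (-x).
Proof. apply (step_lo U5 U4). uu; field. intros; uu; auto_derive; auto; field. apply expn_U4. Qed.

Definition atl (y : R) := 2 * (y + y^3/3 + y^5/5 + y^7/7).
Definition atu (y : R) := 2 * (y + y^3/3 + y^5/5) + 2 * y^7 / (7 * (1 - y^2)).

Lemma atanh_lo y : 0 <= y < 1 -> atl y <= ln (1 + y) - ln (1 - y).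
Proof.
  intros Hy.
  assert (H := mono_deriv (fun t => ln (1+t) - ln (1-t) - atl t)
     (fun t => 2 * t^8 / (1 - t^2)) 0 y (proj1 Hy)).
  unfold atl in *. rewrite Rplus_0_r, Rminus_0_r, ln_1 in H.
  assert (H2 : 0 <= ln (1 + y) - ln (1 - y) - 2 * (y + y ^ 3 / 3 + y ^ 5 / 5 + y ^ 7 / 7)).
  { replace 0 with (0 - 0 - 2 * (0 + 0 ^ 3 / 3 + 0 ^ 5 / 5 + 0 ^ 7 / 7)) by field.
    apply H.
    - intros c Hc. auto_derive. repeat split; lra. field. split; nra.
    - intros c Hc. apply Rmult_le_pos; [|left; apply Rinv_0_lt_compat; nra].
      apply Rmult_le_pos; [lra| apply pow_le; lra]. }
  lra.
Qed.

Lemma atanh_hi y : 0 <= y < 1 -> ln (1 + y) - ln (1 - y) <= atu y.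
Proof.
  intros Hy.
  assert (H := mono_deriv (fun t => atu t - (ln (1+t) - ln (1-t)))
     (fun t => 4/7 * t^8 / (1 - t^2)^2) 0 y (proj1 Hy)).
  unfold atu in *. rewrite Rplus_0_r, Rminus_0_r, ln_1 in H.
  assert (H2 : 0 <= 2 * (y + y ^ 3 / 3 + y ^ 5 / 5) + 2 * y ^ 7 / (7 * (1 - y ^ 2)) - (ln (1 + y) - ln (1 - y))).
  { replace 0 with (2 * (0 + 0 ^ 3 / 3 + 0 ^ 5 / 5) + 2 * 0 ^ 7 / (7 * (1 - 0 ^ 2)) - (0 - 0)) by field.
    apply H.
    - intros c Hc. auto_derive. repeat split; try lra; nra. field. repeat split; nra.
    - intros c Hc. apply Rmult_le_pos; [|left; apply Rinv_0_lt_compat; apply pow_lt; nra].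
      apply Rmult_le_pos; [lra| apply pow_le; lra]. }
  lra.
Qed.

Lemma ln_le_sub1 x : 0 < x -> ln x <= x - 1.
Proof.
  intros Hx. assert (H : x <= exp (x - 1)).
  { destruct (Rle_dec 1 x) as [H1|H1].
    - assert (H := exp_T1 (x - 1) ltac:(lra)). unfold T1 in H. lra.
    - assert (H2 := expn_U1 (1 - x) ltac:(lra)). unfold U1, U0 in H2.
      replace (- (1 - x)) with (x - 1) in H2 by ring. lra. }
  apply ln_mono in H; auto. rewrite ln_exp in H. auto.
Qed.

Lemma ln_ge_1inv x : 0 < x -> 1 - 1/x <= ln x.
Proof.
  intros Hx. assert (H := ln_le_sub1 (/x) ltac:(apply Rinv_0_lt_compat; lra)).
  rewrite ln_Rinv in H by lra. unfold Rdiv. lra.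
Qed.

Lemma ln_tangent a L : 0 < a -> 0 < L -> ln L <= ln a + (L - a)/a.
Proof.
  intros Ha HL. assert (H := ln_le_sub1 (L/a) ltac:(apply Rdiv_lt_0_compat; lra)).
  unfold Rdiv in H. rewrite ln_mult in H by (try apply Rinv_0_lt_compat; lra).
  rewrite ln_Rinv in H by lra.
  replace ((L - a) / a) with (L * / a - 1) by (field; lra). lra.
Qed.

Definition psi z := z * (3 + z) / (6 + 4 * z).

Lemma pade_ln z : 0 <= z -> ln (1 + z) <= z * (6 + z) / (6 + 4 * z).
Proof.
  intros Hz.
  assert (H := mono_deriv (fun t => t * (6 + t) / (6 + 4 * t) - ln (1 + t))
     (fun t => 4 * t^3 / ((6 + 4*t)^2 * (1 + t))) 0 z Hz).
  cbv beta in H. replace (ln (1+0)) with 0 in H by (rewrite Rplus_0_r; symmetry; apply ln_1).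
  replace (0 * (6 + 0) / (6 + 4 * 0) - 0) with 0 in H by field.
  cut (0 <= z * (6 + z) / (6 + 4 * z) - ln (1 + z)); [lra|].
  apply H.
  - intros c Hc. auto_derive. repeat split; lra. field. lra.
  - intros c Hc. apply Rmult_le_pos. apply Rmult_le_pos; [lra | apply pow_le; lra].
    left; apply Rinv_0_lt_compat. apply Rmult_lt_0_compat; [apply pow_lt|]; lra.
Qed.

Lemma psi_mono z1 z2 : 0 <= z1 <= z2 -> psi z1 <= psi z2.
Proof.
  intros [H1 H2]. unfold psi.
  apply (Rmult_le_reg_r ((6 + 4*z1) * (6 + 4*z2))). nra.
  replace (z1 * (3 + z1) / (6 + 4 * z1) * ((6 + 4 * z1) * (6 + 4 * z2))) with
     (z1 * (3 + z1) * (6 + 4 * z2)) by (field; lra).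
  replace (z2 * (3 + z2) / (6 + 4 * z2) * ((6 + 4 * z1) * (6 + 4 * z2))) with
     (z2 * (3 + z2) * (6 + 4 * z1)) by (field; lra).
  assert (0 <= (z2 - z1) * (18 + 6*(z1+z2) + 4*z1*z2)) by (apply Rmult_le_pos; nra).
  nra.
Qed.

Definition hh L := L * ln (1 + 1/L).

Lemma hh_mono a L : 0 < a <= L -> hh a <= hh L.
Proof.
  intros [Ha HL]. unfold hh.
  apply (mono_deriv (fun t => t * ln (1 + 1/t)) (fun t => ln (1 + 1/t) - 1/(t+1)) a L HL).
  - intros c Hc. auto_derive. split; [lra|]. split; [|auto].
    assert (0 < 1/c) by (apply Rdiv_lt_0_compat; lra). lra. unfold Rdiv. field. split; lra.
  - intros c Hc. assert (H := ln_ge_1inv (1 + 1/c)).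
    assert (0 < 1/c) by (apply Rdiv_lt_0_compat; lra).
    specialize (H ltac:(lra)).
    replace (1 - 1 / (1 + 1 / c)) with (1/(c+1)) in H by (field; lra). lra.
Qed.

Lemma ln_as_atanh q : 1 <= q ->
  0 <= (q-1)/(q+1) < 1 /\ ln q = ln (1 + (q-1)/(q+1)) - ln (1 - (q-1)/(q+1)).
Proof.
  intros Hq. set (y := (q-1)/(q+1)).
  assert (Hy : 0 <= y < 1).
  { unfold y. split. apply Rmult_le_pos; [lra|left; apply Rinv_0_lt_compat; lra].
    apply (Rmult_lt_reg_r (q+1)); [lra|]. field_simplify; lra. }
  split; auto.
  replace (ln (1+y) - ln (1-y)) with (ln (1+y) + ln (/ (1-y))) by (rewrite ln_Rinv by lra; ring). rewrite <- ln_mult by (try apply Rinv_0_lt_compat; lra).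
  f_equal. unfold y. field. lra.
Qed.

Lemma ln_up1 q : 1 <= q -> ln q <= atu ((q-1)/(q+1)).
Proof. intros Hq. destruct (ln_as_atanh q Hq) as [Hy ->]. apply atanh_hi; auto. Qed.
Lemma ln_lo1 q : 1 <= q -> atl ((q-1)/(q+1)) <= ln q.
Proof. intros Hq. destruct (ln_as_atanh q Hq) as [Hy ->]. apply atanh_lo; auto. Qed.
Lemma ln_up_lt1 q : 0 < q <= 1 -> ln q <= - atl ((1/q-1)/(1/q+1)).
Proof.
  intros Hq. assert (1 <= 1/q). { apply (Rmult_le_reg_r q); [lra|]. field_simplify; lra. }
  assert (H2 := ln_lo1 (1/q) H); clear H; rename H2 into H. assert (E: ln (1/q) = - ln q) by (unfold Rdiv; rewrite Rmult_1_l; apply ln_Rinv; lra). rewrite E in H. lra.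
Qed.
Lemma ln_lo_lt1 q : 0 < q <= 1 -> - atu ((1/q-1)/(1/q+1)) <= ln q.
Proof.
  intros Hq. assert (1 <= 1/q). { apply (Rmult_le_reg_r q); [lra|]. field_simplify; lra. }
  assert (H2 := ln_up1 (1/q) H); clear H; rename H2 into H. assert (E: ln (1/q) = - ln q) by (unfold Rdiv; rewrite Rmult_1_l; apply ln_Rinv; lra). rewrite E in H. lra.
Qed.

Lemma hh_lo a : 0 < a -> a * atl (1/(2*a+1)) <= hh a.
Proof.
  intros Ha. unfold hh. apply Rmult_le_compat_l; [lra|].
  assert (Hq : 1 <= 1 + 1/a) by (assert (0 < 1/a) by (apply Rdiv_lt_0_compat; lra); lra).
  assert (H := ln_lo1 _ Hq).
  replace ((1 + 1/a - 1)/(1 + 1/a + 1)) with (1/(2*a+1)) in H by (field; lra). auto.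
Qed.

Definition C0 := 4785/10000.

Definition Kx L := (exp L * L + 1) * ln (1 + exp L * L) / L + (1 - exp L) * ln L
                   - exp L * L - 1 - ln (1 + L).

Lemma Kx_small L : 0 < L ->
  Kx L = (exp L + 1/L) * ln (L + exp (-L)) + (exp L - 1) * (- ln L) - ln (1 + L).
Proof.
  intros HL. unfold Kx.
  assert (E : 1 + exp L * L = exp L * (L + exp (-L))).
  { rewrite Rmult_plus_distr_l, <- exp_plus. replace (L + - L) with 0 by ring. rewrite exp_0. ring. }
  assert (Hp : 0 < L + exp (-L)) by (generalize (exp_pos (-L)); lra).
  rewrite E, ln_mult, ln_exp by (try apply exp_pos; lra).
  field. lra.
Qed.

Lemma Kx_large L : 0 < L ->
  L * Kx L = (exp L * L + 1) * ln (1 + 1/(exp L * L)) + ln L - hh L.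
Proof.
  intros HL. unfold Kx, hh.
  assert (Hu : 0 < exp L * L) by (apply Rmult_lt_0_compat; [apply exp_pos|lra]).
  assert (E1 : ln (1 + exp L * L) = L + ln L + ln (1 + 1/(exp L * L))).
  { replace (1 + exp L * L) with ((exp L * L) * (1 + 1/(exp L * L))) by (field; split; [lra| apply Rgt_not_eq, exp_pos]).
    rewrite ln_mult, ln_mult, ln_exp; try lra; try apply exp_pos.
    assert (0 < 1/(exp L * L)) by (apply Rdiv_lt_0_compat; lra). lra. }
  assert (E2 : ln (1 + L) = ln L + ln (1 + 1/L)).
  { replace (1 + L) with (L * (1 + 1/L)) by (field; lra).
    rewrite ln_mult; try lra. assert (0 < 1/L) by (apply Rdiv_lt_0_compat; lra). lra. }
  rewrite E1, E2. field. lra.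
Qed.

Lemma pade_u u : 0 < u -> (u + 1) * ln (1 + 1/u) <= 1 + psi (1/u).
Proof.
  intros Hu. assert (Hz : 0 < 1/u) by (apply Rdiv_lt_0_compat; lra).
  assert (H := pade_ln (1/u) ltac:(lra)).
  apply Rle_trans with ((u+1) * (1/u * (6 + 1/u) / (6 + 4 * (1/u)))).
  apply Rmult_le_compat_l; lra.
  unfold psi. right. field. split; lra.
Qed.

Lemma T6_ge1 a : 0 <= a -> 1 <= T6 a.
Proof.
  intros Ha. unfold T6, T5, T4, T3, T2, T1.
  assert (0 <= a^2) by (apply pow_le; lra).
  assert (0 <= a^3) by (apply pow_le; lra). assert (0 <= a^4) by (apply pow_le; lra).
  assert (0 <= a^5) by (apply pow_le; lra). assert (0 <= a^6) by (apply pow_le; lra). lra.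
Qed.

Lemma R3 a b la : 0 < a <= b -> ln a <= la ->
  1 + psi (1/(a * T6 a)) + la - a * atl (1/(2*a+1)) <= C0 * a ->
  1 + psi (1/(a * T6 a)) + la + (b-a)/a - a * atl (1/(2*a+1)) <= C0 * b ->
  forall L, a <= L <= b -> Kx L <= C0.
Proof.
  intros Hab Hla H1 H2 L HL.
  assert (HL0 : 0 < L) by lra.
  assert (Hu : a * T6 a <= exp L * L).
  { assert (T6 a <= exp L). { apply Rle_trans with (exp a). apply exp_T6; lra. apply exp_mono; lra. }
    assert (0 <= T6 a) by (generalize (T6_ge1 a ltac:(lra)); lra).
    rewrite (Rmult_comm (exp L) L). apply Rmult_le_compat; lra. }
  assert (HT : 0 < a * T6 a) by (apply Rmult_lt_0_compat; [lra| generalize (T6_ge1 a ltac:(lra)); lra]).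
  assert (Hpsi : psi (1/(exp L * L)) <= psi (1/(a * T6 a))).
  { apply psi_mono. split. left; apply Rdiv_lt_0_compat; lra.
    unfold Rdiv. rewrite !Rmult_1_l. apply Rinv_le_contravar; lra. }
  assert (Hpu := pade_u (exp L * L) ltac:(lra)).
  assert (Hln := ln_tangent a L ltac:(lra) HL0).
  assert (Hh := hh_mono a L ltac:(lra)).
  assert (Hh2 := hh_lo a ltac:(lra)).
  assert (HK := Kx_large L HL0).
  set (P := psi (1 / (a * T6 a))) in *.
  set (A := a * atl (1 / (2 * a + 1))) in *.
  assert (Hmain : L * Kx L <= 1 + P + la + (L - a)/a - A) by lra.
  assert (Hlin : 1 + P + la + (L - a)/a - A <= C0 * L).
  { destruct (Rle_dec C0 (1/a)) as [Hs|Hs].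
    - assert (E : (L - a)/a = (L - a) * (1/a)) by (field; lra).
      assert (E2 : (b - a)/a = (b - a) * (1/a)) by (field; lra).
      rewrite E in *. rewrite E2 in H2.
      assert ((L - a) * (1/a - C0) <= (b - a) * (1/a - C0)) by (apply Rmult_le_compat_r; lra).
      nra.
    - assert (E : (L - a)/a = (L - a) * (1/a)) by (field; lra). rewrite E.
      assert ((L - a) * (1/a - C0) <= 0) by (apply Rmult_le_0_l; lra). nra. }
  apply (Rmult_le_reg_l L); lra.
Qed.

Lemma exp_up_U5 b : 0 <= b -> 0 < U5 b -> exp b <= 1 / U5 b.
Proof.
  intros Hb HU. assert (H := expn_U5 b Hb).
  rewrite exp_Ropp in H. assert (0 < exp b) by apply exp_pos.
  apply (Rmult_le_reg_r (U5 b)); auto.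
  replace (1 / U5 b * U5 b) with 1 by (field; lra).
  apply (Rmult_le_reg_l (/ exp b)). apply Rinv_0_lt_compat; auto.
  replace (/ exp b * (exp b * U5 b)) with (U5 b) by (field; lra). lra.
Qed.

Lemma expn_up_T6 b : 0 <= b -> exp (-b) <= 1 / T6 b.
Proof.
  intros Hb. rewrite exp_Ropp. assert (H := exp_T6 b Hb). assert (H1 := T6_ge1 b Hb).
  unfold Rdiv. rewrite Rmult_1_l. apply Rinv_le_contravar; lra.
Qed.

Lemma tpe_mono L b : 0 <= L <= b -> L + exp (-L) <= b + exp (-b).
Proof.
  intros HL. apply (mono_deriv (fun t => t + exp (-t)) (fun t => 1 - exp (-t)) L b); [lra| |].
  - intros c _. auto_derive; auto. ring.
  - intros c Hc. assert (exp (-c) <= 1) by (apply exp_le1; lra). lra.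
Qed.

Lemma tpe_ge1 L : 0 <= L -> 1 <= L + exp (-L).
Proof. intros HL. assert (H := expn_U1 L HL). unfold U1, U0 in H. lra. Qed.

Lemma R2 a b : 0 < a <= b -> b <= 1 -> 0 < U5 b -> 1 <= b + 1 / T6 b ->
  (1 / U5 b + 1/a) * atu ((b + 1 / T6 b - 1)/(b + 1 / T6 b + 1))
   + (1 / U5 b - 1) * atu ((1/a-1)/(1/a+1)) - atl ((1 + a - 1)/(1 + a + 1)) <= C0 ->
  forall L, a <= L <= b -> Kx L <= C0.
Proof.
  intros Hab Hb1 HU Hq Hc L HL.
  assert (HL0 : 0 < L) by lra.
  rewrite Kx_small by lra.
  set (Rb := 1 / U5 b) in *.
  assert (HeL : exp L <= Rb) by (apply Rle_trans with (exp b); [apply exp_mono; lra| apply exp_up_U5; lra]).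
  assert (HeL1 : 1 <= exp L) by (apply exp_ge1; lra).
  set (q := b + 1 / T6 b) in *.
  assert (Hlq : ln (L + exp (-L)) <= atu ((q-1)/(q+1))).
  { apply Rle_trans with (ln q); [|apply ln_up1; auto].
    apply ln_mono. generalize (tpe_ge1 L ltac:(lra)); lra.
    apply Rle_trans with (b + exp (-b)). apply tpe_mono; lra.
    unfold q. generalize (expn_up_T6 b ltac:(lra)); lra. }
  assert (Hl0 : 0 <= ln (L + exp (-L))).
  { rewrite <- ln_1. apply ln_mono; [lra|]. apply tpe_ge1; lra. }
  assert (HinvL : 1/L <= 1/a).
  { unfold Rdiv. rewrite !Rmult_1_l. apply Rinv_le_contravar; lra. }
  assert (HinvL0 : 0 < 1/L) by (apply Rdiv_lt_0_compat; lra).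
  assert (Hna : - ln L <= atu ((1/a-1)/(1/a+1))).
  { assert (ln a <= ln L) by (apply ln_mono; lra).
    assert (Hx := ln_lo_lt1 a ltac:(lra)). lra. }
  assert (Hna0 : 0 <= - ln L).
  { assert (ln L <= ln 1) by (apply ln_mono; lra). rewrite ln_1 in H. lra. }
  assert (H1a : atl ((1 + a - 1)/(1 + a + 1)) <= ln (1 + L)).
  { apply Rle_trans with (ln (1 + a)). apply ln_lo1; lra. apply ln_mono; lra. }
  assert (P1 : (exp L + 1/L) * ln (L + exp (-L)) <= (Rb + 1/a) * atu ((q-1)/(q+1))).
  { apply Rmult_le_compat; lra. }
  assert (P2 : (exp L - 1) * (- ln L) <= (Rb - 1) * atu ((1/a-1)/(1/a+1))).
  { apply Rmult_le_compat; lra. }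
  lra.
Qed.

Lemma ln_le_div_e x : 0 < x -> ln x <= x / exp 1.
Proof.
  intros Hx. assert (He := exp_pos 1).
  assert (H := ln_le_sub1 (x / exp 1) ltac:(apply Rdiv_lt_0_compat; lra)).
  unfold Rdiv in H. rewrite ln_mult, ln_Rinv, ln_exp in H by (try apply Rinv_0_lt_compat; lra).
  unfold Rdiv. lra.
Qed.

Lemma R1 L : 0 < L <= 13/256 -> Kx L <= C0.
Proof.
  intros HL. rewrite Kx_small by lra.
  assert (He := exp_pos L).
  assert (Hln1 : ln (L + exp (-L)) <= L^2/2).
  { assert (H := ln_le_sub1 (L + exp (-L)) ltac:(generalize (exp_pos (-L)); lra)).
    assert (H2 := expn_U2 L ltac:(lra)). unfold U2, U1, U0 in H2. lra. }
  assert (Hl0 : 0 <= ln (L + exp (-L))).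
  { rewrite <- ln_1. apply ln_mono; [lra|]. apply tpe_ge1; lra. }
  assert (HeL : exp L <= 1 / U5 (13/256)).
  { apply Rle_trans with (exp (13/256)). apply exp_mono; lra. apply exp_up_U5. lra.
    unfold U5, U4, U3, U2, U1, U0. lra. }
  assert (P1 : (exp L + 1/L) * ln (L + exp (-L)) <= (exp L * L + 1) * L / 2).
  { apply Rle_trans with ((exp L + 1/L) * (L^2/2)).
    apply Rmult_le_compat_l; auto. assert (0 < 1/L) by (apply Rdiv_lt_0_compat; lra). lra.
    right. field. lra. }
  assert (P1' : (exp L * L + 1) * L / 2 <= (1 / U5 (13/256) * (13/256) + 1) * (13/256) / 2).
  { assert (exp L * L <= 1 / U5 (13/256) * (13/256)) by (apply Rmult_le_compat; lra).
    assert ((exp L * L + 1) * L <= (1 / U5 (13/256) * (13/256) + 1) * (13/256)).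
    apply Rmult_le_compat; try lra. assert (0 < exp L * L) by (apply Rmult_lt_0_compat; lra). lra.
    lra. }
  assert (P2 : (exp L - 1) * (- ln L) <= exp (L - 1)).
  { assert (Hm : - ln L = ln (1/L)).
    { unfold Rdiv. rewrite Rmult_1_l, ln_Rinv; lra. }
    assert (Hx : ln (1/L) <= (1/L) / exp 1) by (apply ln_le_div_e; apply Rdiv_lt_0_compat; lra).
    assert (Hy : exp L - 1 <= L * exp L).
    { assert (H := expn_U1 L ltac:(lra)). unfold U1, U0 in H.
      assert (E : exp (-L) * exp L = 1) by (rewrite <- exp_plus; replace (-L + L) with 0 by ring; apply exp_0).
      nra. }
    assert (0 <= exp L - 1) by (generalize (exp_ge1 L ltac:(lra)); lra).
    assert (0 <= ln (1/L)).
    { rewrite <- ln_1. apply ln_mono; [lra|]. apply (Rmult_le_reg_r L); [lra|]. field_simplify; lra. }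
    rewrite Hm. apply Rle_trans with ((L * exp L) * ((1/L) / exp 1)).
    apply Rmult_le_compat; lra.
    right. unfold Rminus. rewrite exp_plus, exp_Ropp. field. split; [apply Rgt_not_eq, exp_pos| lra]. }
  assert (P3 : exp (L - 1) <= 1 / T6 (243/256)).
  { apply Rle_trans with (exp (-(243/256))). apply exp_mono; lra. apply expn_up_T6; lra. }
  assert (P4 : 0 <= ln (1 + L)).
  { rewrite <- ln_1. apply ln_mono; lra. }
  assert (Num : (1 / U5 (13/256) * (13/256) + 1) * (13/256) / 2 + 1 / T6 (243/256) <= C0).
  { unfold U5, U4, U3, U2, U1, U0, T6, T5, T4, T3, T2, T1, C0. lra. }
  lra.
Qed.

Lemma R4 L : 6 <= L -> Kx L <= C0.
Proof.
  intros HL. assert (HL0 : 0 < L) by lra.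
  assert (HK := Kx_large L HL0).
  assert (He1 : 1 <= exp L) by (apply exp_ge1; lra).
  assert (Hu : 1 <= exp L * L) by nra.
  assert (Hpu := pade_u (exp L * L) ltac:(lra)).
  assert (Hpsi : psi (1/(exp L * L)) <= psi 1).
  { apply psi_mono. split. left; apply Rdiv_lt_0_compat; lra.
    apply (Rmult_le_reg_r (exp L * L)); [lra|]. field_simplify; lra. }
  assert (Hln := ln_le_div_e L HL0).
  assert (HeT : T6 1 <= exp 1) by (apply exp_T6; lra).
  assert (Hle : L / exp 1 <= L / T6 1).
  { unfold Rdiv. apply Rmult_le_compat_l; [lra|]. apply Rinv_le_contravar; auto.
    generalize (T6_ge1 1 ltac:(lra)); lra. }
  assert (Hh := hh_mono 6 L ltac:(lra)).
  assert (Hh2 := hh_lo 6 ltac:(lra)).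
  assert (Hp1 : psi 1 = 4/10) by (unfold psi; field).
  assert (Num1 : 1 / T6 1 <= 368/1000) by (unfold T6, T5, T4, T3, T2, T1; lra).
  assert (Num2 : 9/10 <= 6 * atl (1/(2*6+1))) by (unfold atl; lra).
  assert (E : L / T6 1 = L * (1 / T6 1)) by (field; generalize (T6_ge1 1 ltac:(lra)); lra).
  assert (L * (1 / T6 1) <= L * (368/1000)) by (apply Rmult_le_compat_l; lra).
  apply (Rmult_le_reg_l L); [lra|]. unfold C0 in *. lra.
Qed.

Lemma ln_le_of_T6 a l : 0 < a -> 0 <= l -> a <= T6 l -> ln a <= l.
Proof.
  intros Ha Hl H. rewrite <- (ln_exp l). apply ln_mono; auto.
  apply Rle_trans with (T6 l); auto. apply exp_T6; auto.
Qed.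

Lemma ln_le_of_U5 a l : 0 < a -> l <= 0 -> a <= U5 (-l) -> ln a <= l.
Proof.
  intros Ha Hl H. rewrite <- (ln_exp l). apply ln_mono; auto.
  apply Rle_trans with (U5 (-l)); auto. replace l with (- - l) at 2 by ring. apply expn_U5. lra.
Qed.

Lemma ln_ge_of_U5 q t : 0 < q -> 0 <= t -> 0 < U5 t -> 1 <= q * U5 t -> t <= ln q.
Proof.
  intros Hq Ht HU H. rewrite <- (ln_exp t). apply ln_mono. apply exp_pos.
  apply Rle_trans with (1 / U5 t). apply exp_up_U5; auto.
  apply (Rmult_le_reg_r (U5 t)); auto. replace (1 / U5 t * U5 t) with 1 by (field; lra). lra.
Qed.

Lemma R2' a b Rb l1 na la1 : 0 < a <= b -> b <= 1 -> 0 < U5 b -> 1 <= Rb * U5 b ->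
  0 <= l1 -> b + U4 b <= T6 l1 ->
  0 <= na -> 1 <= a * T6 na ->
  0 <= la1 -> 0 < U5 la1 -> 1 <= (1 + a) * U5 la1 ->
  (Rb + 1/a) * l1 + (Rb - 1) * na - la1 <= C0 ->
  forall L, a <= L <= b -> Kx L <= C0.
Proof.
  intros Hab Hb1 HU HRb Hl1 Hl1c Hna Hnac Hla1 HU2 Hla1c Hc L HL.
  assert (HL0 : 0 < L) by lra.
  rewrite Kx_small by lra.
  assert (HeL : exp L <= Rb).
  { apply Rle_trans with (exp b); [apply exp_mono; lra|].
    apply Rle_trans with (1 / U5 b). apply exp_up_U5; lra.
    apply (Rmult_le_reg_r (U5 b)); auto. replace (1 / U5 b * U5 b) with 1 by (field; lra). lra. }
  assert (HeL1 : 1 <= exp L) by (apply exp_ge1; lra).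
  assert (Hlq : ln (L + exp (-L)) <= l1).
  { apply ln_le_of_T6; auto. generalize (tpe_ge1 L ltac:(lra)); lra.
    apply Rle_trans with (b + exp (-b)). apply tpe_mono; lra.
    generalize (expn_U4 b ltac:(lra)); lra. }
  assert (Hl0 : 0 <= ln (L + exp (-L))).
  { rewrite <- ln_1. apply ln_mono; [lra|]. apply tpe_ge1; lra. }
  assert (HinvL : 1/L <= 1/a).
  { unfold Rdiv. rewrite !Rmult_1_l. apply Rinv_le_contravar; lra. }
  assert (HinvL0 : 0 < 1/L) by (apply Rdiv_lt_0_compat; lra).
  assert (Hna' : - ln L <= na).
  { assert (ln a <= ln L) by (apply ln_mono; lra).
    assert (ln (1/a) <= na).
    { apply ln_le_of_T6; auto. apply Rdiv_lt_0_compat; lra.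
      apply (Rmult_le_reg_l a); [lra|]. replace (a * (1/a)) with 1 by (field; lra). lra. }
    assert (E : ln (1/a) = - ln a) by (unfold Rdiv; rewrite Rmult_1_l; apply ln_Rinv; lra).
    lra. }
  assert (Hna0 : 0 <= - ln L).
  { assert (ln L <= ln 1) by (apply ln_mono; lra). rewrite ln_1 in H. lra. }
  assert (H1a : la1 <= ln (1 + L)).
  { apply Rle_trans with (ln (1 + a)). apply ln_ge_of_U5; lra. apply ln_mono; lra. }
  assert (P1 : (exp L + 1/L) * ln (L + exp (-L)) <= (Rb + 1/a) * l1).
  { apply Rmult_le_compat; lra. }
  assert (P2 : (exp L - 1) * (- ln L) <= (Rb - 1) * na).
  { apply Rmult_le_compat; lra. }
  lra.
Qed.

Lemma R3' a b la zP P t : 0 < a <= b -> ln a <= la ->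
  0 <= zP -> 1 <= zP * (a * T6 a) -> psi zP <= P ->
  0 <= t -> 0 < U5 t -> 1 <= (1 + 1/a) * U5 t ->
  1 + P + la - a * t <= C0 * a ->
  1 + P + la + (b-a)/a - a * t <= C0 * b ->
  forall L, a <= L <= b -> Kx L <= C0.
Proof.
  intros Hab Hla HzP HzPc HP Ht HUt Htc H1 H2.
  assert (HT : 0 < a * T6 a) by (apply Rmult_lt_0_compat; [lra| generalize (T6_ge1 a ltac:(lra)); lra]).
  assert (Hpsi : psi (1/(a * T6 a)) <= P).
  { apply Rle_trans with (psi zP); auto. apply psi_mono. split.
    left; apply Rdiv_lt_0_compat; lra.
    apply (Rmult_le_reg_r (a * T6 a)); auto.
    assert (1 <= T6 a) by (apply T6_ge1; lra).
    replace (1 / (a * T6 a) * (a * T6 a)) with 1 by (field; split; lra). lra. }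
  intros L HL.
  assert (HL0 : 0 < L) by lra.
  assert (Hu : a * T6 a <= exp L * L).
  { assert (T6 a <= exp L). { apply Rle_trans with (exp a). apply exp_T6; lra. apply exp_mono; lra. }
    assert (0 <= T6 a) by (generalize (T6_ge1 a ltac:(lra)); lra).
    rewrite (Rmult_comm (exp L) L). apply Rmult_le_compat; lra. }
  assert (Hpsi2 : psi (1/(exp L * L)) <= psi (1/(a * T6 a))).
  { apply psi_mono. split. left; apply Rdiv_lt_0_compat; lra.
    unfold Rdiv. rewrite !Rmult_1_l. apply Rinv_le_contravar; lra. }
  assert (Hpu := pade_u (exp L * L) ltac:(lra)).
  assert (Hln := ln_tangent a L ltac:(lra) HL0).
  assert (Hhm := hh_mono a L ltac:(lra)).
  assert (Hh2 : a * t <= hh a).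
  { unfold hh. apply Rmult_le_compat_l; [lra|]. apply ln_ge_of_U5; auto.
    assert (0 < 1/a) by (apply Rdiv_lt_0_compat; lra). lra. }
  assert (HK := Kx_large L HL0).
  assert (Hmain : L * Kx L <= 1 + P + la + (L - a)/a - a * t) by lra.
  assert (Hlin : 1 + P + la + (L - a)/a - a * t <= C0 * L).
  { destruct (Rle_dec C0 (1/a)) as [Hs|Hs].
    - assert (E : (L - a)/a = (L - a) * (1/a)) by (field; lra).
      assert (E2 : (b - a)/a = (b - a) * (1/a)) by (field; lra).
      rewrite E in *. rewrite E2 in H2.
      assert ((L - a) * (1/a - C0) <= (b - a) * (1/a - C0)) by (apply Rmult_le_compat_r; lra).
      nra.
    - assert (E : (L - a)/a = (L - a) * (1/a)) by (field; lra). rewrite E.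
      assert ((L - a) * (1/a - C0) <= 0) by (apply Rmult_le_0_l; lra). nra. }
  apply (Rmult_le_reg_l L); lra.
Qed.

Ltac numc := unfold U5, U4, U3, U2, U1, U0, T6, T5, T4, T3, T2, T1, psi, C0; lra.

Lemma Kx_mid2 L : 13/256 <= L <= 154/256 -> Kx L <= C0.
Proof.
  intros HL.
  destruct (Rle_dec L (15/128)).
  { apply (R2' (13/256) (15/128) (9211/8192) (27/4096) (6175/2048) (811/16384)); [numc..|lra]. }
  destruct (Rle_dec L (47/256)).
  { apply (R2' (15/128) (47/256) (9843/8192) (129/8192) (35237/16384) (1815/16384)); [numc..|lra]. }
  destruct (Rle_dec L (31/128)).
  { apply (R2' (47/256) (31/128) (10437/8192) (439/16384) (13901/8192) (2761/16384)); [numc..|lra]. }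
  destruct (Rle_dec L (75/256)).
  { apply (R2' (31/128) (75/256) (10981/8192) (157/4096) (23245/16384) (3553/16384)); [numc..|lra]. }
  destruct (Rle_dec L (43/128)).
  { apply (R2' (75/256) (43/128) (11463/8192) (405/8192) (2515/2048) (4209/16384)); [numc..|lra]. }
  destruct (Rle_dec L (3/8)).
  { apply (R2' (43/128) (3/8) (23839/16384) (991/16384) (17875/16384) (4745/16384)); [numc..|lra]. }
  destruct (Rle_dec L (105/256)).
  { apply (R2' (3/8) (105/256) (6173/4096) (1167/16384) (2009/2048) (5217/16384)); [numc..|lra]. }
  destruct (Rle_dec L (113/256)).
  { apply (R2' (105/256) (113/256) (6369/4096) (333/4096) (14603/16384) (5631/16384)); [numc..|lra]. }
  destruct (Rle_dec L (15/32)).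
  { apply (R2' (113/256) (15/32) (26183/16384) (1483/16384) (1675/2048) (2995/8192)); [numc..|lra]. }
  destruct (Rle_dec L (63/128)).
  { apply (R2' (15/32) (63/128) (6701/4096) (1617/16384) (12415/16384) (3149/8192)); [numc..|lra]. }
  destruct (Rle_dec L (33/64)).
  { apply (R2' (63/128) (33/64) (1715/1024) (1755/16384) (11615/16384) (6557/16384)); [numc..|lra]. }
  destruct (Rle_dec L (137/256)).
  { apply (R2' (33/64) (137/256) (27981/16384) (1873/16384) (10853/16384) (1703/4096)); [numc..|lra]. }
  destruct (Rle_dec L (71/128)).
  { apply (R2' (137/256) (71/128) (28533/16384) (1993/16384) (2561/4096) (3511/8192)); [numc..|lra]. }
  destruct (Rle_dec L (147/256)).
  { apply (R2' (71/128) (147/256) (29097/16384) (529/4096) (1207/2048) (7229/16384)); [numc..|lra]. }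
  destruct (Rle_dec L (151/256)).
  { apply (R2' (147/256) (151/256) (29555/16384) (277/2048) (9089/16384) (3717/8192)); [numc..|lra]. }
  destruct (Rle_dec L (77/128)).
  { apply (R2' (151/256) (77/128) (1869/1024) (573/4096) (4325/8192) (7595/16384)); [numc..|lra]. }
  lra.
Qed.

Lemma Kx_mid3 L : 154/256 <= L <= 6 -> Kx L <= C0.
Proof.
  intros HL.
  destruct (Rle_dec L (157/256)).
  { apply (R3' (77/128) (157/256) (-4163/8192) (14925/16384) (6053/16384) (15997/16384)); [numc|apply ln_le_of_U5; numc|numc..|lra]. }
  destruct (Rle_dec L (5/8)).
  { apply (R3' (157/256) (5/8) (-4005/8192) (14469/16384) (5895/16384) (3951/4096)); [numc|apply ln_le_of_U5; numc|numc..|lra]. }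
  destruct (Rle_dec L (163/256)).
  { apply (R3' (5/8) (163/256) (-1925/4096) (877/1024) (2871/8192) (61/64)); [numc|apply ln_le_of_U5; numc|numc..|lra]. }
  destruct (Rle_dec L (83/128)).
  { apply (R3' (163/256) (83/128) (-7395/16384) (13613/16384) (2797/8192) (1929/2048)); [numc|apply ln_le_of_U5; numc|numc..|lra]. }
  destruct (Rle_dec L (169/256)).
  { apply (R3' (83/128) (169/256) (-7097/16384) (3303/4096) (1363/4096) (15253/16384)); [numc|apply ln_le_of_U5; numc|numc..|lra]. }
  destruct (Rle_dec L (43/64)).
  { apply (R3' (169/256) (43/64) (-6803/16384) (6413/8192) (2657/8192) (7539/8192)); [numc|apply ln_le_of_U5; numc|numc..|lra]. }
  destruct (Rle_dec L (175/256)).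
  { apply (R3' (43/64) (175/256) (-6515/16384) (12455/16384) (5181/16384) (14907/16384)); [numc|apply ln_le_of_U5; numc|numc..|lra]. }
  destruct (Rle_dec L (89/128)).
  { apply (R3' (175/256) (89/128) (-779/2048) (12099/16384) (1263/4096) (3685/4096)); [numc|apply ln_le_of_U5; numc|numc..|lra]. }
  destruct (Rle_dec L (181/256)).
  { apply (R3' (89/128) (181/256) (-5953/16384) (11757/16384) (77/256) (7289/8192)); [numc|apply ln_le_of_U5; numc|numc..|lra]. }
  destruct (Rle_dec L (23/32)).
  { apply (R3' (181/256) (23/32) (-5679/16384) (11427/16384) (4807/16384) (7209/8192)); [numc|apply ln_le_of_U5; numc|numc..|lra]. }
  destruct (Rle_dec L (187/256)).
  { apply (R3' (23/32) (187/256) (-2705/8192) (5555/8192) (4691/16384) (14263/16384)); [numc|apply ln_le_of_U5; numc|numc..|lra]. }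
  destruct (Rle_dec L (95/128)).
  { apply (R3' (187/256) (95/128) (-5145/16384) (10805/16384) (2289/8192) (14111/16384)); [numc|apply ln_le_of_U5; numc|numc..|lra]. }
  destruct (Rle_dec L (193/256)).
  { apply (R3' (95/128) (193/256) (-1221/4096) (5255/8192) (1117/4096) (6981/8192)); [numc|apply ln_le_of_U5; numc|numc..|lra]. }
  destruct (Rle_dec L (49/64)).
  { apply (R3' (193/256) (49/64) (-1157/4096) (5113/8192) (2181/8192) (1727/2048)); [numc|apply ln_le_of_U5; numc|numc..|lra]. }
  destruct (Rle_dec L (199/256)).
  { apply (R3' (49/64) (199/256) (-4375/16384) (311/512) (4259/16384) (6837/8192)); [numc|apply ln_le_of_U5; numc|numc..|lra]. }
  destruct (Rle_dec L (101/128)).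
  { apply (R3' (199/256) (101/128) (-2063/8192) (1211/2048) (65/256) (6767/8192)); [numc|apply ln_le_of_U5; numc|numc..|lra]. }
  destruct (Rle_dec L (205/256)).
  { apply (R3' (101/128) (205/256) (-3881/16384) (9433/16384) (4063/16384) (6699/8192)); [numc|apply ln_le_of_U5; numc|numc..|lra]. }
  destruct (Rle_dec L (13/16)).
  { apply (R3' (205/256) (13/16) (-3639/16384) (9187/16384) (3969/16384) (829/1024)); [numc|apply ln_le_of_U5; numc|numc..|lra]. }
  destruct (Rle_dec L (211/256)).
  { apply (R3' (13/16) (211/256) (-3401/16384) (8949/16384) (1939/8192) (13133/16384)); [numc|apply ln_le_of_U5; numc|numc..|lra]. }
  destruct (Rle_dec L (107/128)).
  { apply (R3' (211/256) (107/128) (-3167/16384) (8719/16384) (3789/16384) (13005/16384)); [numc|apply ln_le_of_U5; numc|numc..|lra]. }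
  destruct (Rle_dec L (217/256)).
  { apply (R3' (107/128) (217/256) (-367/2048) (8497/16384) (3703/16384) (12879/16384)); [numc|apply ln_le_of_U5; numc|numc..|lra]. }
  destruct (Rle_dec L (55/64)).
  { apply (R3' (217/256) (55/64) (-2707/16384) (8281/16384) (3619/16384) (3189/4096)); [numc|apply ln_le_of_U5; numc|numc..|lra]. }
  destruct (Rle_dec L (223/256)).
  { apply (R3' (55/64) (223/256) (-1241/8192) (8073/16384) (1769/8192) (12635/16384)); [numc|apply ln_le_of_U5; numc|numc..|lra]. }
  destruct (Rle_dec L (113/128)).
  { apply (R3' (223/256) (113/128) (-2261/16384) (123/256) (3459/16384) (12517/16384)); [numc|apply ln_le_of_U5; numc|numc..|lra]. }
  destruct (Rle_dec L (229/256)).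
  { apply (R3' (113/128) (229/256) (-1021/8192) (7677/16384) (1691/8192) (12401/16384)); [numc|apply ln_le_of_U5; numc|numc..|lra]. }
  destruct (Rle_dec L (29/32)).
  { apply (R3' (229/256) (29/32) (-913/8192) (117/256) (3307/16384) (12287/16384)); [numc|apply ln_le_of_U5; numc|numc..|lra]. }
  destruct (Rle_dec L (235/256)).
  { apply (R3' (29/32) (235/256) (-403/4096) (7305/16384) (3235/16384) (12175/16384)); [numc|apply ln_le_of_U5; numc|numc..|lra]. }
  destruct (Rle_dec L (119/128)).
  { apply (R3' (235/256) (119/128) (-701/8192) (891/2048) (791/4096) (12065/16384)); [numc|apply ln_le_of_U5; numc|numc..|lra]. }
  destruct (Rle_dec L (241/256)).
  { apply (R3' (119/128) (241/256) (-597/8192) (1739/4096) (3095/16384) (5979/8192)); [numc|apply ln_le_of_U5; numc|numc..|lra]. }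
  destruct (Rle_dec L (61/64)).
  { apply (R3' (241/256) (61/64) (-989/16384) (3395/8192) (757/4096) (2963/4096)); [numc|apply ln_le_of_U5; numc|numc..|lra]. }
  destruct (Rle_dec L (123/128)).
  { apply (R3' (61/64) (123/128) (-393/8192) (1657/4096) (2963/16384) (2937/4096)); [numc|apply ln_le_of_U5; numc|numc..|lra]. }
  destruct (Rle_dec L (31/32)).
  { apply (R3' (123/128) (31/32) (-163/4096) (6523/16384) (365/2048) (365/512)); [numc|apply ln_le_of_U5; numc|numc..|lra]. }
  destruct (Rle_dec L (125/128)).
  { apply (R3' (31/32) (125/128) (-65/2048) (1605/4096) (1439/8192) (11613/16384)); [numc|apply ln_le_of_U5; numc|numc..|lra]. }
  destruct (Rle_dec L (63/64)).
  { apply (R3' (125/128) (63/64) (-97/4096) (6319/16384) (2837/16384) (5773/8192)); [numc|apply ln_le_of_U5; numc|numc..|lra]. }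
  destruct (Rle_dec L (127/128)).
  { apply (R3' (63/64) (127/128) (-129/8192) (1555/4096) (699/4096) (11481/16384)); [numc|apply ln_le_of_U5; numc|numc..|lra]. }
  destruct (Rle_dec L (1)).
  { apply (R3' (127/128) (1) (-1/128) (6123/16384) (2757/16384) (1427/2048)); [numc|apply ln_le_of_U5; numc|numc..|lra]. }
  destruct (Rle_dec L (129/128)).
  { apply (R3' (1) (129/128) (0) (1507/4096) (1359/8192) (11351/16384)); [numc|apply ln_le_of_T6; numc|numc..|lra]. }
  destruct (Rle_dec L (65/64)).
  { apply (R3' (129/128) (65/64) (1/128) (5935/16384) (2679/16384) (1411/2048)); [numc|apply ln_le_of_T6; numc|numc..|lra]. }
  destruct (Rle_dec L (131/128)).
  { apply (R3' (65/64) (131/128) (255/16384) (1461/4096) (1321/8192) (11225/16384)); [numc|apply ln_le_of_T6; numc|numc..|lra]. }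
  destruct (Rle_dec L (33/32)).
  { apply (R3' (131/128) (33/32) (95/4096) (2877/8192) (2605/16384) (11163/16384)); [numc|apply ln_le_of_T6; numc|numc..|lra]. }
  destruct (Rle_dec L (133/128)).
  { apply (R3' (33/32) (133/128) (505/16384) (2833/8192) (321/2048) (5551/8192)); [numc|apply ln_le_of_T6; numc|numc..|lra]. }
  destruct (Rle_dec L (67/64)).
  { apply (R3' (133/128) (67/64) (157/4096) (1395/4096) (633/4096) (11041/16384)); [numc|apply ln_le_of_T6; numc|numc..|lra]. }
  destruct (Rle_dec L (135/128)).
  { apply (R3' (67/64) (135/128) (751/16384) (5495/16384) (2497/16384) (10981/16384)); [numc|apply ln_le_of_T6; numc|numc..|lra]. }
  destruct (Rle_dec L (17/16)).
  { apply (R3' (135/128) (17/16) (873/16384) (1353/4096) (1231/8192) (5461/8192)); [numc|apply ln_le_of_T6; numc|numc..|lra]. }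
  destruct (Rle_dec L (137/128)).
  { apply (R3' (17/16) (137/128) (497/8192) (2665/8192) (607/4096) (10863/16384)); [numc|apply ln_le_of_T6; numc|numc..|lra]. }
  destruct (Rle_dec L (69/64)).
  { apply (R3' (137/128) (69/64) (557/8192) (2625/8192) (1197/8192) (5403/8192)); [numc|apply ln_le_of_T6; numc|numc..|lra]. }
  destruct (Rle_dec L (139/128)).
  { apply (R3' (69/64) (139/128) (1233/16384) (1293/4096) (1181/8192) (2687/4096)); [numc|apply ln_le_of_T6; numc|numc..|lra]. }
  destruct (Rle_dec L (35/32)).
  { apply (R3' (139/128) (35/32) (1351/16384) (2547/8192) (2329/16384) (10691/16384)); [numc|apply ln_le_of_T6; numc|numc..|lra]. }
  destruct (Rle_dec L (141/128)).
  { apply (R3' (35/32) (141/128) (1469/16384) (5019/16384) (2297/16384) (10635/16384)); [numc|apply ln_le_of_T6; numc|numc..|lra]. }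
  destruct (Rle_dec L (71/64)).
  { apply (R3' (141/128) (71/64) (1585/16384) (309/1024) (2265/16384) (2645/4096)); [numc|apply ln_le_of_T6; numc|numc..|lra]. }
  destruct (Rle_dec L (285/256)).
  { apply (R3' (71/64) (285/256) (1701/16384) (4871/16384) (2235/16384) (10525/16384)); [numc|apply ln_le_of_T6; numc|numc..|lra]. }
  destruct (Rle_dec L (143/128)).
  { apply (R3' (285/256) (143/128) (1759/16384) (4835/16384) (2219/16384) (5249/8192)); [numc|apply ln_le_of_T6; numc|numc..|lra]. }
  destruct (Rle_dec L (287/256)).
  { apply (R3' (143/128) (287/256) (227/2048) (75/256) (551/4096) (10471/16384)); [numc|apply ln_le_of_T6; numc|numc..|lra]. }
  destruct (Rle_dec L (9/8)).
  { apply (R3' (287/256) (9/8) (1873/16384) (1191/4096) (2189/16384) (2611/4096)); [numc|apply ln_le_of_T6; numc|numc..|lra]. }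
  destruct (Rle_dec L (289/256)).
  { apply (R3' (9/8) (289/256) (965/8192) (4729/16384) (1087/8192) (10417/16384)); [numc|apply ln_le_of_T6; numc|numc..|lra]. }
  destruct (Rle_dec L (145/128)).
  { apply (R3' (289/256) (145/128) (1987/16384) (4695/16384) (135/1024) (5195/8192)); [numc|apply ln_le_of_T6; numc|numc..|lra]. }
  destruct (Rle_dec L (291/256)).
  { apply (R3' (145/128) (291/256) (511/4096) (1165/4096) (2145/16384) (2591/4096)); [numc|apply ln_le_of_T6; numc|numc..|lra]. }
  destruct (Rle_dec L (73/64)).
  { apply (R3' (291/256) (73/64) (525/4096) (2313/8192) (1065/8192) (10337/16384)); [numc|apply ln_le_of_T6; numc|numc..|lra]. }
  destruct (Rle_dec L (293/256)).
  { apply (R3' (73/64) (293/256) (539/4096) (287/1024) (529/4096) (10311/16384)); [numc|apply ln_le_of_T6; numc|numc..|lra]. }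
  destruct (Rle_dec L (147/128)).
  { apply (R3' (293/256) (147/128) (553/4096) (4559/16384) (1051/8192) (10285/16384)); [numc|apply ln_le_of_T6; numc|numc..|lra]. }
  destruct (Rle_dec L (295/256)).
  { apply (R3' (147/128) (295/256) (567/4096) (2263/8192) (261/2048) (10259/16384)); [numc|apply ln_le_of_T6; numc|numc..|lra]. }
  destruct (Rle_dec L (37/32)).
  { apply (R3' (295/256) (37/32) (581/4096) (4493/16384) (2073/16384) (10233/16384)); [numc|apply ln_le_of_T6; numc|numc..|lra]. }
  destruct (Rle_dec L (297/256)).
  { apply (R3' (37/32) (297/256) (2379/16384) (1115/4096) (2059/16384) (319/512)); [numc|apply ln_le_of_T6; numc|numc..|lra]. }
  destruct (Rle_dec L (149/128)).
  { apply (R3' (297/256) (149/128) (1217/8192) (1107/4096) (2045/16384) (5091/8192)); [numc|apply ln_le_of_T6; numc|numc..|lra]. }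
  destruct (Rle_dec L (299/256)).
  { apply (R3' (149/128) (299/256) (2489/16384) (1099/4096) (127/1024) (10157/16384)); [numc|apply ln_le_of_T6; numc|numc..|lra]. }
  destruct (Rle_dec L (75/64)).
  { apply (R3' (299/256) (75/64) (159/1024) (1091/4096) (1009/8192) (10131/16384)); [numc|apply ln_le_of_T6; numc|numc..|lra]. }
  destruct (Rle_dec L (301/256)).
  { apply (R3' (75/64) (301/256) (2599/16384) (4333/16384) (2005/16384) (5053/8192)); [numc|apply ln_le_of_T6; numc|numc..|lra]. }
  destruct (Rle_dec L (151/128)).
  { apply (R3' (301/256) (151/128) (1327/8192) (4301/16384) (1991/16384) (10081/16384)); [numc|apply ln_le_of_T6; numc|numc..|lra]. }
  destruct (Rle_dec L (303/256)).
  { apply (R3' (151/128) (303/256) (677/4096) (2135/8192) (1977/16384) (1257/2048)); [numc|apply ln_le_of_T6; numc|numc..|lra]. }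
  destruct (Rle_dec L (19/16)).
  { apply (R3' (303/256) (19/16) (1381/8192) (265/1024) (1965/16384) (10031/16384)); [numc|apply ln_le_of_T6; numc|numc..|lra]. }
  destruct (Rle_dec L (305/256)).
  { apply (R3' (19/16) (305/256) (11/64) (4209/16384) (1951/16384) (10007/16384)); [numc|apply ln_le_of_T6; numc|numc..|lra]. }
  destruct (Rle_dec L (153/128)).
  { apply (R3' (305/256) (153/128) (1435/8192) (4179/16384) (969/8192) (4991/8192)); [numc|apply ln_le_of_T6; numc|numc..|lra]. }
  destruct (Rle_dec L (307/256)).
  { apply (R3' (153/128) (307/256) (731/4096) (4149/16384) (1925/16384) (4979/8192)); [numc|apply ln_le_of_T6; numc|numc..|lra]. }
  destruct (Rle_dec L (77/64)).
  { apply (R3' (307/256) (77/64) (2977/16384) (515/2048) (1913/16384) (9933/16384)); [numc|apply ln_le_of_T6; numc|numc..|lra]. }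
  destruct (Rle_dec L (309/256)).
  { apply (R3' (77/64) (309/256) (1515/8192) (2045/8192) (475/4096) (9909/16384)); [numc|apply ln_le_of_T6; numc|numc..|lra]. }
  destruct (Rle_dec L (155/128)).
  { apply (R3' (309/256) (155/128) (3083/16384) (4061/16384) (1887/16384) (9885/16384)); [numc|apply ln_le_of_T6; numc|numc..|lra]. }
  destruct (Rle_dec L (311/256)).
  { apply (R3' (155/128) (311/256) (49/256) (63/256) (937/8192) (9861/16384)); [numc|apply ln_le_of_T6; numc|numc..|lra]. }
  destruct (Rle_dec L (39/32)).
  { apply (R3' (311/256) (39/32) (3189/16384) (1001/4096) (931/8192) (9837/16384)); [numc|apply ln_le_of_T6; numc|numc..|lra]. }
  destruct (Rle_dec L (313/256)).
  { apply (R3' (39/32) (313/256) (1621/8192) (3975/16384) (925/8192) (4907/8192)); [numc|apply ln_le_of_T6; numc|numc..|lra]. }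
  destruct (Rle_dec L (157/128)).
  { apply (R3' (313/256) (157/128) (1647/8192) (3947/16384) (1837/16384) (4895/8192)); [numc|apply ln_le_of_T6; numc|numc..|lra]. }
  destruct (Rle_dec L (315/256)).
  { apply (R3' (157/128) (315/256) (1673/8192) (3919/16384) (1825/16384) (9767/16384)); [numc|apply ln_le_of_T6; numc|numc..|lra]. }
  destruct (Rle_dec L (79/64)).
  { apply (R3' (315/256) (79/64) (1699/8192) (973/4096) (1813/16384) (9743/16384)); [numc|apply ln_le_of_T6; numc|numc..|lra]. }
  destruct (Rle_dec L (317/256)).
  { apply (R3' (79/64) (317/256) (1725/8192) (483/2048) (1801/16384) (1215/2048)); [numc|apply ln_le_of_T6; numc|numc..|lra]. }
  destruct (Rle_dec L (159/128)).
  { apply (R3' (317/256) (159/128) (1751/8192) (3837/16384) (1789/16384) (9697/16384)); [numc|apply ln_le_of_T6; numc|numc..|lra]. }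
  destruct (Rle_dec L (319/256)).
  { apply (R3' (159/128) (319/256) (1777/8192) (1905/8192) (889/8192) (4837/8192)); [numc|apply ln_le_of_T6; numc|numc..|lra]. }
  destruct (Rle_dec L (5/4)).
  { apply (R3' (319/256) (5/4) (3605/16384) (3783/16384) (883/8192) (9651/16384)); [numc|apply ln_le_of_T6; numc|numc..|lra]. }
  destruct (Rle_dec L (321/256)).
  { apply (R3' (5/4) (321/256) (457/2048) (3757/16384) (877/8192) (2407/4096)); [numc|apply ln_le_of_T6; numc|numc..|lra]. }
  destruct (Rle_dec L (161/128)).
  { apply (R3' (321/256) (161/128) (927/4096) (3731/16384) (1743/16384) (4803/8192)); [numc|apply ln_le_of_T6; numc|numc..|lra]. }
  destruct (Rle_dec L (323/256)).
  { apply (R3' (161/128) (323/256) (3759/16384) (3705/16384) (433/4096) (9583/16384)); [numc|apply ln_le_of_T6; numc|numc..|lra]. }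
  destruct (Rle_dec L (325/256)).
  { apply (R3' (323/256) (325/256) (3809/16384) (3679/16384) (215/2048) (9561/16384)); [numc|apply ln_le_of_T6; numc|numc..|lra]. }
  destruct (Rle_dec L (327/256)).
  { apply (R3' (325/256) (327/256) (3911/16384) (907/4096) (849/8192) (2379/4096)); [numc|apply ln_le_of_T6; numc|numc..|lra]. }
  destruct (Rle_dec L (329/256)).
  { apply (R3' (327/256) (329/256) (4011/16384) (1789/8192) (419/4096) (37/64)); [numc|apply ln_le_of_T6; numc|numc..|lra]. }
  destruct (Rle_dec L (331/256)).
  { apply (R3' (329/256) (331/256) (4111/16384) (441/2048) (827/8192) (2357/4096)); [numc|apply ln_le_of_T6; numc|numc..|lra]. }
  destruct (Rle_dec L (333/256)).
  { apply (R3' (331/256) (333/256) (2105/8192) (435/2048) (1633/16384) (9385/16384)); [numc|apply ln_le_of_T6; numc|numc..|lra]. }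
  destruct (Rle_dec L (335/256)).
  { apply (R3' (333/256) (335/256) (4309/16384) (429/2048) (1611/16384) (4671/8192)); [numc|apply ln_le_of_T6; numc|numc..|lra]. }
  destruct (Rle_dec L (337/256)).
  { apply (R3' (335/256) (337/256) (4407/16384) (3385/16384) (1591/16384) (9299/16384)); [numc|apply ln_le_of_T6; numc|numc..|lra]. }
  destruct (Rle_dec L (339/256)).
  { apply (R3' (337/256) (339/256) (4505/16384) (3339/16384) (785/8192) (9257/16384)); [numc|apply ln_le_of_T6; numc|numc..|lra]. }
  destruct (Rle_dec L (341/256)).
  { apply (R3' (339/256) (341/256) (4601/16384) (3293/16384) (775/8192) (9215/16384)); [numc|apply ln_le_of_T6; numc|numc..|lra]. }
  destruct (Rle_dec L (343/256)).
  { apply (R3' (341/256) (343/256) (2349/8192) (203/1024) (765/8192) (4587/8192)); [numc|apply ln_le_of_T6; numc|numc..|lra]. }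
  destruct (Rle_dec L (173/128)).
  { apply (R3' (343/256) (173/128) (2397/8192) (801/4096) (755/8192) (9133/16384)); [numc|apply ln_le_of_T6; numc|numc..|lra]. }
  destruct (Rle_dec L (349/256)).
  { apply (R3' (173/128) (349/256) (617/2048) (785/4096) (741/8192) (567/1024)); [numc|apply ln_le_of_T6; numc|numc..|lra]. }
  destruct (Rle_dec L (11/8)).
  { apply (R3' (349/256) (11/8) (2539/8192) (3077/16384) (1453/16384) (2253/4096)); [numc|apply ln_le_of_T6; numc|numc..|lra]. }
  destruct (Rle_dec L (355/256)).
  { apply (R3' (11/8) (355/256) (2609/8192) (3015/16384) (713/8192) (8953/16384)); [numc|apply ln_le_of_T6; numc|numc..|lra]. }
  destruct (Rle_dec L (359/256)).
  { apply (R3' (355/256) (359/256) (5357/16384) (2955/16384) (1399/16384) (8895/16384)); [numc|apply ln_le_of_T6; numc|numc..|lra]. }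
  destruct (Rle_dec L (363/256)).
  { apply (R3' (359/256) (363/256) (5541/16384) (2877/16384) (341/4096) (4409/8192)); [numc|apply ln_le_of_T6; numc|numc..|lra]. }
  destruct (Rle_dec L (23/16)).
  { apply (R3' (363/256) (23/16) (2861/8192) (2801/16384) (1329/16384) (8743/16384)); [numc|apply ln_le_of_T6; numc|numc..|lra]. }
  destruct (Rle_dec L (187/128)).
  { apply (R3' (23/16) (187/128) (2973/8192) (1355/8192) (161/2048) (8651/16384)); [numc|apply ln_le_of_T6; numc|numc..|lra]. }
  destruct (Rle_dec L (381/256)).
  { apply (R3' (187/128) (381/256) (6211/16384) (2605/16384) (1241/16384) (4271/8192)); [numc|apply ln_le_of_T6; numc|numc..|lra]. }
  destruct (Rle_dec L (195/128)).
  { apply (R3' (381/256) (195/128) (6515/16384) (311/2048) (1187/16384) (2105/4096)); [numc|apply ln_le_of_T6; numc|numc..|lra]. }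
  destruct (Rle_dec L (401/256)).
  { apply (R3' (195/128) (401/256) (3449/8192) (2347/16384) (1123/16384) (8267/16384)); [numc|apply ln_le_of_T6; numc|numc..|lra]. }
  destruct (Rle_dec L (13/8)).
  { apply (R3' (401/256) (13/8) (7353/16384) (2187/16384) (1049/16384) (1011/2048)); [numc|apply ln_le_of_T6; numc|numc..|lra]. }
  destruct (Rle_dec L (439/256)).
  { apply (R3' (13/8) (439/256) (7955/16384) (1989/16384) (479/8192) (491/1024)); [numc|apply ln_le_of_T6; numc|numc..|lra]. }
  destruct (Rle_dec L (483/256)).
  { apply (R3' (439/256) (483/256) (8837/16384) (431/4096) (417/8192) (3763/8192)); [numc|apply ln_le_of_T6; numc|numc..|lra]. }
  destruct (Rle_dec L (159/64)).
  { apply (R3' (483/256) (159/64) (5201/8192) (1321/16384) (161/4096) (6967/16384)); [numc|apply ln_le_of_T6; numc|numc..|lra]. }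
  destruct (Rle_dec L (6)).
  { apply (R3' (159/64) (6) (14911/16384) (279/8192) (69/4096) (2771/8192)); [numc|apply ln_le_of_T6; numc|numc..|lra]. }
  lra.
Qed.

Lemma Kx_all L : 0 < L -> Kx L <= C0.
Proof.
  intros HL. destruct (Rle_dec L (13/256)). apply R1; lra.
  destruct (Rle_dec L (154/256)). apply Kx_mid2; lra.
  destruct (Rle_dec L 6). apply Kx_mid3; lra.
  apply R4; lra.
Qed.

End Num.
Import Num.

Lemma rsum_nil f : rsum [] f = 0.
Proof. reflexivity. Qed.
Lemma rsum_cons a l f : rsum (a :: l) f = f a + rsum l f.
Proof. reflexivity. Qed.
Lemma rsum_app l1 l2 f : rsum (l1 ++ l2) f = rsum l1 f + rsum l2 f.
Proof. induction l1; simpl; [ring|]. unfold rsum in *. simpl. rewrite IHl1. ring. Qed.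
Lemma rsum_ext_in l f g : (forall a, In a l -> f a = g a) -> rsum l f = rsum l g.
Proof. induction l; intros H; simpl; auto. unfold rsum in *; simpl. rewrite H, IHl; auto.
  intros; apply H; simpl; auto. simpl; auto. Qed.
Lemma rsum_plus l f g : rsum l (fun a => f a + g a) = rsum l f + rsum l g.
Proof. induction l; simpl; [ring|]. unfold rsum in *; simpl. rewrite IHl. ring. Qed.
Lemma rsum_opp l f : rsum l (fun a => - f a) = - rsum l f.
Proof. induction l; simpl; [ring|]. unfold rsum in *; simpl. rewrite IHl. ring. Qed.
Lemma rsum_scal l c f : rsum l (fun a => c * f a) = c * rsum l f.
Proof. induction l; simpl; [ring|]. unfold rsum in *; simpl. rewrite IHl. ring. Qed.
Lemma rsum_const0 l : rsum l (fun _ => 0) = 0.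
Proof. induction l; simpl; auto. unfold rsum in *; simpl. rewrite IHl. ring. Qed.
Lemma rsum_le l f g : (forall a, In a l -> f a <= g a) -> rsum l f <= rsum l g.
Proof. induction l; intros H; simpl. lra. unfold rsum in *; simpl.
  assert (f a <= g a) by (apply H; simpl; auto).
  assert (fold_right (fun a0 acc => f a0 + acc) 0 l <= fold_right (fun a0 acc => g a0 + acc) 0 l)
    by (apply IHl; intros; apply H; simpl; auto). lra. Qed.
Lemma rsum_filter (p : nat -> bool) l f :
  rsum (filter p l) f = rsum l (fun a => if p a then f a else 0).
Proof. induction l; simpl; auto. destruct (p a); unfold rsum in *; simpl; rewrite IHl; ring. Qed.
Lemma length_filter_rsum (p : nat -> bool) l :
  INR (length (filter p l)) = rsum l (fun a => if p a then 1 else 0).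
Proof. induction l; simpl; auto. destruct (p a); simpl length; rewrite ?S_INR; unfold rsum in *; simpl; rewrite <- IHl; ring. Qed.
Lemma rsum_point l a f g : NoDup l -> In a l -> (forall j, j <> a -> f j = g j) ->
  rsum l f = rsum l g + (f a - g a).
Proof.
  induction l as [|b l IH]; intros Hnd Hin Hfg; [destruct Hin|].
  inversion Hnd; subst. rewrite !rsum_cons.
  destruct Hin as [->|Hin].
  - rewrite (rsum_ext_in l f g) by (intros j Hj; apply Hfg; intros ->; auto). ring.
  - rewrite (IH H2 Hin Hfg). rewrite (Hfg b) by (intros ->; auto). ring.
Qed.

Lemma ln_rprod l f : (forall a, In a l -> 0 < f a) ->
  0 < rprod l f /\ ln (rprod l f) = rsum l (fun a => ln (f a)).
Proof.
  induction l; intros H; simpl. split; [lra| apply ln_1].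
  destruct IHl as [H1 H2]. intros; apply H; simpl; auto.
  assert (0 < f a) by (apply H; simpl; auto).
  unfold rprod, rsum in *. simpl. split. apply Rmult_lt_0_compat; auto.
  rewrite ln_mult by auto. rewrite H2. auto.
Qed.

Lemma firstn_snoc (x : list nat) a t : (t <= length x)%nat -> firstn t (x ++ [a]) = firstn t x.
Proof. intros Ht. rewrite firstn_app. replace (t - length x)%nat with 0%nat by lia. simpl. apply app_nil_r. Qed.

Lemma cnt_snoc x a t i : (t <= length x)%nat -> cnt (x ++ [a]) t i = cnt x t i.
Proof. intros Ht. unfold cnt. rewrite firstn_snoc; auto. Qed.

Lemma sym_snoc x a t : (t < length x)%nat -> sym (x ++ [a]) t = sym x t.
Proof. intros Ht. unfold sym. apply app_nth1; auto. Qed.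

Lemma sym_last x a : sym (x ++ [a]) (length x) = a.
Proof. unfold sym. rewrite app_nth2 by lia. rewrite Nat.sub_diag. reflexivity. Qed.

Lemma nocc_eq x j : nocc x j = count_occ Nat.eq_dec x j.
Proof. unfold nocc, cnt. rewrite firstn_all. auto. Qed.

Lemma nocc_snoc x a j : nocc (x ++ [a]) j = (nocc x j + if Nat.eq_dec a j then 1 else 0)%nat.
Proof. rewrite !nocc_eq, count_occ_app. simpl. destruct (Nat.eq_dec a j); auto. Qed.

Lemma cnt_last x a : cnt (x ++ [a]) (length x) a = nocc x a.
Proof. rewrite cnt_snoc by lia. reflexivity. Qed.

Definition gstep (g : nat -> R) (x : list nat) :=
  rsum (seq 0 (length x)) (fun t => g (cnt x t (sym x t))).
Definition gsym (K : nat) (G : nat -> R) (x : list nat) :=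
  rsum (seq 0 K) (fun j => G (nocc x j)).

Lemma gstep_snoc g x a : gstep g (x ++ [a]) = gstep g x + g (nocc x a).
Proof.
  unfold gstep. rewrite length_app. simpl. rewrite Nat.add_1_r, seq_S, rsum_app. simpl.
  rewrite sym_last, cnt_last. f_equal.
  - apply rsum_ext_in. intros t Ht. apply in_seq in Ht. rewrite sym_snoc, cnt_snoc by lia. auto.
  - unfold rsum; simpl; ring.
Qed.

Lemma gsym_snoc K G x a : (a < K)%nat ->
  gsym K G (x ++ [a]) = gsym K G x + (G (S (nocc x a)) - G (nocc x a)).
Proof.
  intros Ha. unfold gsym.
  rewrite (rsum_point (seq 0 K) a (fun j => G (nocc (x ++ [a]) j)) (fun j => G (nocc x j))).
  - rewrite nocc_snoc. destruct (Nat.eq_dec a a); [|congruence]. rewrite Nat.add_1_r. auto.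
  - apply seq_NoDup.
  - apply in_seq. lia.
  - intros j Hj. rewrite nocc_snoc. destruct (Nat.eq_dec a j); [congruence|]. rewrite Nat.add_0_r. auto.
Qed.

Lemma gstep_gsym K g G x : Forall (fun a => (a < K)%nat) x -> G 0%nat = 0 ->
  (forall k, G (S k) - G k = g k) -> gstep g x = gsym K G x.
Proof.
  intros Hx HG0 Hg. induction x as [|a x IH] using rev_ind.
  - unfold gstep, gsym. simpl length. simpl seq. rewrite rsum_nil.
    rewrite (rsum_ext_in _ _ (fun _ => 0)). rewrite rsum_const0; auto.
    intros j _. unfold nocc, cnt. simpl. auto.
  - apply Forall_app in Hx. destruct Hx as [Hx Ha]. inversion Ha; subst.
    rewrite gstep_snoc, gsym_snoc by auto. rewrite IH by auto. rewrite Hg. auto.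
Qed.


Definition lnfact (k : nat) := rsum (seq 1 k) (fun i => ln (INR i)).

Lemma lnfact_S k : lnfact (S k) = lnfact k + ln (INR (S k)).
Proof. unfold lnfact. rewrite seq_S, rsum_app. rewrite rsum_cons, rsum_nil.
  replace (1 + k)%nat with (S k) by lia. ring. Qed.

Lemma lnfact_0 : lnfact 0 = 0.
Proof. reflexivity. Qed.

Lemma ln_1p_up a : 0 < a -> ln (1 + 1/a) <= atu (1/(2*a+1)).
Proof.
  intros Ha. assert (Hq : 1 <= 1 + 1/a) by (assert (0 < 1/a) by (apply Rdiv_lt_0_compat; lra); lra).
  assert (H := ln_up1 _ Hq).
  replace ((1 + 1/a - 1)/(1 + 1/a + 1)) with (1/(2*a+1)) in H by (field; lra). auto.
Qed.
Lemma ln_1p_lo a : 0 < a -> atl (1/(2*a+1)) <= ln (1 + 1/a).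
Proof.
  intros Ha. assert (Hq : 1 <= 1 + 1/a) by (assert (0 < 1/a) by (apply Rdiv_lt_0_compat; lra); lra).
  assert (H := ln_lo1 _ Hq).
  replace ((1 + 1/a - 1)/(1 + 1/a + 1)) with (1/(2*a+1)) in H by (field; lra). auto.
Qed.

Lemma ln_diff a : 0 < a -> ln (a + 1) - ln a = ln (1 + 1/a).
Proof.
  intros Ha. replace (a + 1) with (a * (1 + 1/a)) by (field; lra).
  rewrite ln_mult; [ring| lra|]. assert (0 < 1/a) by (apply Rdiv_lt_0_compat; lra). lra.
Qed.

Lemma atu_poly y : 0 < y < 1 -> (1/(2*y)) * atu y - 1 <= y^2/(3*(1-y^2)).
Proof.
  intros Hy. unfold atu.
  assert (E : 1 / (2 * y) * (2 * (y + y ^ 3 / 3 + y ^ 5 / 5) + 2 * y ^ 7 / (7 * (1 - y ^ 2))) - 1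
     - y ^ 2 / (3 * (1 - y ^ 2)) = - (2/15 * y^4 + 2/35 * y^6) / (1 - y^2)).
  { field. split; [|lra]. nra. }
  assert (0 <= (2/15 * y^4 + 2/35 * y^6) / (1 - y^2)).
  { apply Rmult_le_pos. assert (0 <= y^4) by (apply pow_le; lra). assert (0 <= y^6) by (apply pow_le; lra). lra.
    left. apply Rinv_0_lt_compat. nra. }
  lra.
Qed.

Definition cS := 2 - 3/2 * ln 2 - 1/24.

Definition stir (k : nat) := lnfact k - (INR k + 1/2) * ln (INR k) + INR k.

Lemma stir_step k : (1 <= k)%nat ->
  stir (S k) >= stir k - (1/(12 * INR k) - 1/(12 * INR (S k))).
Proof.
  intros Hk. unfold stir. rewrite lnfact_S, S_INR.
  assert (Hk1 : 1 <= INR k) by (apply (le_INR 1); auto).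
  assert (H := ln_1p_up (INR k) ltac:(lra)).
  rewrite <- ln_diff in H by lra.
  set (y := 1/(2 * INR k + 1)) in *.
  assert (Hy : 0 < y < 1).
  { unfold y. split. apply Rdiv_lt_0_compat; lra. apply (Rmult_lt_reg_r (2 * INR k + 1)); [lra|].
    field_simplify; lra. }
  assert (Hp := atu_poly y Hy).
  assert (E1 : 1/(2*y) = INR k + 1/2) by (unfold y; field; lra).
  assert (E2 : y^2/(3*(1-y^2)) = 1/(12 * INR k) - 1/(12 * (INR k + 1))).
  { unfold y. field. repeat split; nra. }
  rewrite E1, E2 in Hp.
  assert ((INR k + 1/2) * (ln (INR k + 1) - ln (INR k)) <= (INR k + 1/2) * atu y)
    by (apply Rmult_le_compat_l; lra).
  lra.
Qed.

Lemma ln2_lo : 6931/10000 <= ln 2.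
Proof. assert (H := ln_lo1 2 ltac:(lra)). unfold atl in H. lra. Qed.
Lemma ln2_hi : ln 2 <= 69316/100000.
Proof. assert (H := ln_up1 2 ltac:(lra)). unfold atu in H. lra. Qed.

Lemma stir_lo k : (2 <= k)%nat -> stir k >= stir 2 - 1/24 + 1/(12 * INR k).
Proof.
  induction k as [|k IH]; intros Hk; [lia|].
  destruct (Nat.eq_dec k 1) as [->|Hne].
  - simpl INR. lra.
  - assert (H1 := IH ltac:(lia)). assert (H2 := stir_step k ltac:(lia)). lra.
Qed.

Lemma stir2 : stir 2 = 2 - 3/2 * ln 2.
Proof.
  unfold stir. rewrite !lnfact_S, lnfact_0. simpl INR. rewrite ln_1.
  replace (1+1) with 2 by ring. lra.
Qed.

Lemma stirling k : (1 <= k)%nat ->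
  INR k * ln (INR k) - lnfact (k - 1) - 1/2 * ln (INR k) <= INR k - cS.
Proof.
  intros Hk.
  assert (E : lnfact (k - 1) = lnfact k - ln (INR k)).
  { destruct k; [lia|]. rewrite lnfact_S. replace (S k - 1)%nat with k by lia. ring. }
  rewrite E.
  assert (stir k >= cS); [|unfold stir in *; lra].
  destruct (Nat.eq_dec k 1) as [->|Hne].
  - unfold stir, cS. rewrite lnfact_S, lnfact_0. simpl INR. rewrite ln_1.
    generalize ln2_lo; lra.
  - assert (H := stir_lo k ltac:(lia)). rewrite stir2 in H.
    assert (0 < 1/(12 * INR k)).
    { apply Rdiv_lt_0_compat; [lra|]. assert (1 <= INR k) by (apply (le_INR 1); auto). lra. }
    unfold cS. lra.
Qed.

Definition Ttr (n : nat) (b : R) := (INR n + b - 1/2) * ln (INR n + b) - INR n - (b - 1/2) * ln b.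

Lemma trapezoid n b : 0 < b -> rsum (seq 0 n) (fun t => ln (INR t + b)) <= Ttr n b.
Proof.
  intros Hb. induction n as [|n IH].
  - unfold Ttr. simpl seq. rewrite rsum_nil. simpl INR. rewrite Rplus_0_l. lra.
  - rewrite seq_S, rsum_app, rsum_cons, rsum_nil. simpl (0 + n)%nat.
    assert (Hstep : ln (INR n + b) <= Ttr (S n) b - Ttr n b).
    { unfold Ttr. rewrite S_INR.
      assert (Ha : 0 < INR n + b) by (generalize (pos_INR n); lra).
      assert (H := ln_1p_lo (INR n + b) Ha).
      rewrite <- ln_diff in H by lra.
      assert (Hat : 2 * (1/(2 * (INR n + b) + 1)) <= atl (1/(2 * (INR n + b) + 1))).
      { unfold atl. set (y := 1/(2 * (INR n + b) + 1)).
        assert (0 < y) by (unfold y; apply Rdiv_lt_0_compat; lra).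
        assert (0 <= y^3) by (apply pow_le; lra). assert (0 <= y^5) by (apply pow_le; lra).
        assert (0 <= y^7) by (apply pow_le; lra). lra. }
      assert (1 <= (INR n + b + 1/2) * (ln (INR n + b + 1) - ln (INR n + b))).
      { apply Rle_trans with ((INR n + b + 1/2) * (2 * (1 / (2 * (INR n + b) + 1)))).
        right. field. lra. apply Rmult_le_compat_l; lra. }
      replace (INR n + 1 + b) with (INR n + b + 1) by ring. nra. }
    lra.
Qed.


Lemma mul_nn_np a b : 0 <= a -> b <= 0 -> a * b <= 0.
Proof. intros. nra. Qed.

Lemma final_real (n m : R) : 1 <= m -> m < n ->
  let L := ln (n / m) in let b := m / L in
  (n + b - 1/2) * ln (n + b) - n - (b - 1/2) * ln b - m * ln b + n - cS * m - n * ln n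
  + (m - 1/2) * ln m + 1/2 * ln n - m * ln (ln (exp 1 * n / m)) - 56/100 * m - 82/1000 <= 0.
Proof.
  intros Hm Hmn L b.
  assert (Hr1 : 1 < n / m) by (apply (Rmult_lt_reg_r m); [lra|]; field_simplify; lra).
  assert (HL : 0 < L) by (unfold L; rewrite <- ln_1; apply ln_increasing; lra).
  set (r := n / m) in *.
  assert (Hr : exp L = r) by (unfold L; apply exp_ln; lra).
  assert (Hn : n = m * r) by (unfold r; field; lra).
  set (u := r * L).
  assert (Hu : 0 < u) by (unfold u; apply Rmult_lt_0_compat; lra).
  assert (E1 : ln n = ln m + L).
  { rewrite Hn, ln_mult by lra. fold L. auto. }
  assert (E2 : ln b = ln m - ln L).
  { unfold b, Rdiv. rewrite ln_mult, ln_Rinv; try apply Rinv_0_lt_compat; lra. }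
  assert (E3 : ln (n + b) = ln m + ln (1 + u) - ln L).
  { replace (n + b) with (m * ((1 + u) * / L)) by (unfold b, u; rewrite Hn; field; lra).
    rewrite ln_mult, ln_mult, ln_Rinv; try apply Rinv_0_lt_compat; try apply Rmult_lt_0_compat;
      try apply Rinv_0_lt_compat; lra. }
  assert (E4 : ln (ln (exp 1 * n / m)) = ln (1 + L)).
  { f_equal. replace (exp 1 * n / m) with (exp 1 * r) by (unfold r; field; lra).
    rewrite ln_mult, ln_exp. fold L. auto. apply exp_pos. lra. }
  rewrite E1, E2, E3, E4.
  assert (HK := Kx_all L HL).
  unfold Kx in HK. rewrite Hr in HK. fold u in HK. replace (r * L) with u in HK by auto.
  assert (HG : L <= ln (1 + u)).
  { rewrite <- (ln_exp L). apply ln_mono. apply exp_pos. rewrite Hr.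
    assert (H := expn_U1 L ltac:(lra)). unfold U1, U0 in H.
    assert (E : exp (-L) * exp L = 1) by (rewrite <- exp_plus; replace (-L + L) with 0 by ring; apply exp_0).
    rewrite Hr in E. unfold u. nra. }
  assert (HcS : C0 + 44/100 <= cS) by (unfold C0, cS; generalize ln2_hi; lra).
  assert (Hid : (n + b - 1/2) * (ln m + ln (1 + u) - ln L) - n - (b - 1/2) * (ln m - ln L)
     - m * (ln m - ln L) + n - cS * m - n * (ln m + L) + (m - 1/2) * ln m + 1/2 * (ln m + L)
     - m * ln (1 + L) - 56/100 * m - 82/1000
     = m * ((u + 1) * ln (1 + u) / L + (1 - r) * ln L - u - 1 - ln (1 + L) + 1 - cS - 56/100)
       + (- 1/2 * ln (1 + u) + 1/2 * L - 82/1000)).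
  { unfold b, u. rewrite Hn. field. lra. }
  rewrite Hid.
  assert (m * ((u + 1) * ln (1 + u) / L + (1 - r) * ln L - u - 1 - ln (1 + L) + 1 - cS - 56 / 100) <= 0).
  { apply mul_nn_np; [lra|]. replace (u * 1) with u in * by ring.
    assert (E : (u + 1) * ln (1 + u) / L = (r * L + 1) * ln (1 + r * L) / L) by (unfold u; auto).
    unfold u in *. lra. }
  lra.
Qed.

Definition ind (k : nat) : R := if Nat.eqb k 0 then 1 else 0.
Definition Fln (k : nat) : R := if Nat.eqb k 0 then 0 else ln (INR k).

Lemma rsum_usedA K x h :
  rsum (usedA K x) h = rsum (seq 0 K) (fun j => if Nat.ltb 0 (nocc x j) then h j else 0).
Proof. unfold usedA. apply rsum_filter. Qed.

Lemma mcount K x : Forall (fun a => (a < K)%nat) x -> INR (msize K x) = gstep ind x.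
Proof.
  intros Hx. unfold msize, usedA. rewrite length_filter_rsum.
  rewrite (gstep_gsym K ind (fun k => if Nat.ltb 0 k then 1 else 0)); auto.
  intros k. unfold ind. destruct k; simpl; ring.
Qed.

Lemma rsum_seq_1 s n : rsum (seq s n) (fun _ => 1) = INR n.
Proof. revert s; induction n; intros s. reflexivity. simpl seq. rewrite rsum_cons, IHn, S_INR. ring. Qed.

Lemma ncount K x : Forall (fun a => (a < K)%nat) x -> INR (length x) = gsym K INR x.
Proof.
  intros Hx. rewrite <- (gstep_gsym K (fun _ => 1) INR); auto.
  - unfold gstep. rewrite rsum_seq_1. auto.
  - intros k. rewrite S_INR. ring.
Qed.

Lemma fcount K x : Forall (fun a => (a < K)%nat) x ->
  gstep Fln x = gsym K (fun k => lnfact (k - 1)) x.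
Proof.
  intros Hx. apply gstep_gsym; auto.
  intros k. unfold Fln. destruct k as [|k].
  - replace (1 - 1)%nat with 0%nat by lia. replace (0 - 1)%nat with 0%nat by lia. simpl Nat.eqb. lra.
  - replace (S (S k) - 1)%nat with (S k) by lia. replace (S k - 1)%nat with k by lia.
    rewrite lnfact_S. simpl Nat.eqb. lra.
Qed.

Lemma sym_lt K x t : Forall (fun a => (a < K)%nat) x -> (t < length x)%nat -> (sym x t < K)%nat.
Proof. intros Hx Ht. rewrite Forall_forall in Hx. apply Hx. apply nth_In. auto. Qed.

Lemma ln_div' a b : 0 < a -> 0 < b -> ln (a / b) = ln a - ln b.
Proof. intros. unfold Rdiv. rewrite ln_mult, ln_Rinv; try apply Rinv_0_lt_compat; lra. Qed.

Lemma lnS_eq K x w beta : Forall (fun a => (a < K)%nat) x -> valid_weights K x w -> 0 < beta ->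
  ln (S_beta beta w x) = INR (msize K x) * ln beta - CL w x + gstep Fln x
     - rsum (seq 0 (length x)) (fun t => ln (INR t + beta)).
Proof.
  intros Hx Hw Hb. unfold S_beta.
  assert (Hterm : forall t, In t (seq 0 (length x)) ->
    0 < S_cond beta w x t (sym x t) /\
    ln (S_cond beta w x t (sym x t)) =
      ln beta * ind (cnt x t (sym x t))
      - (if Nat.eqb (cnt x t (sym x t)) 0 then ln (1 / w t (sym x t)) else 0)
      + Fln (cnt x t (sym x t)) - ln (INR t + beta)).
  { intros t Ht. apply in_seq in Ht.
    assert (Htb : 0 < INR t + beta) by (generalize (pos_INR t); lra).
    unfold S_cond, ind, Fln.
    destruct (cnt x t (sym x t)) as [|k] eqn:Ek; [replace (Nat.ltb 0 0) with false by reflexivity | replace (Nat.ltb 0 (S k)) with true by reflexivity]; simpl Nat.eqb; cbv iota beta.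
    - destruct (Hw t ltac:(lia)) as [Hpos _].
      assert (Hwp : 0 < w t (sym x t)) by (apply Hpos; [apply sym_lt; auto; lia| auto]).
      split. apply Rdiv_lt_0_compat; [apply Rmult_lt_0_compat|]; lra.
      rewrite ln_div', ln_mult by (try apply Rmult_lt_0_compat; lra).
      rewrite ln_div' by lra. rewrite ln_1. ring.
    - assert (0 < INR (S k)) by (apply lt_0_INR; lia).
      split. apply Rdiv_lt_0_compat; lra.
      rewrite ln_div' by lra. ring. }
  destruct (ln_rprod (seq 0 (length x)) (fun t => S_cond beta w x t (sym x t))) as [_ Hln].
  { intros t Ht. apply Hterm; auto. }
  rewrite Hln. rewrite (rsum_ext_in _ _ _ (fun t Ht => proj2 (Hterm t Ht))).
  unfold Rminus. rewrite !rsum_plus, !rsum_opp, rsum_scal.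
  rewrite (mcount K x Hx). unfold gstep, CL. rewrite rsum_filter. ring.
Qed.

Lemma ML_eq K x : (1 <= length x)%nat ->
  ML_term K x = - INR (length x) * ln (INR (length x))
     + rsum (usedA K x) (fun j => INR (nocc x j) * ln (INR (nocc x j))).
Proof.
  intros Hn. unfold ML_term.
  assert (Hn0 : 0 < INR (length x)) by (apply lt_0_INR; lia).
  assert (Hj : forall j, In j (usedA K x) -> 0 < INR (nocc x j)).
  { intros j Hj. unfold usedA in Hj. apply filter_In in Hj. destruct Hj as [_ Hj].
    apply Nat.ltb_lt in Hj. apply lt_0_INR; auto. }
  destruct (ln_rprod (usedA K x) (fun j => INR (nocc x j) ^ nocc x j)) as [Hp Hl].
  { intros j Hjj. apply pow_lt. auto. }
  rewrite ln_mult; [| apply Rinv_0_lt_compat, pow_lt; auto | auto].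
  rewrite ln_Rinv by (apply pow_lt; auto). rewrite ln_pow by auto. rewrite Hl.
  f_equal. ring. apply rsum_ext_in. intros j Hjj. apply ln_pow. auto.
Qed.

Lemma msize_rsum K x : INR (msize K x) = rsum (seq 0 K) (fun j => if Nat.ltb 0 (nocc x j) then 1 else 0).
Proof. unfold msize, usedA. apply length_filter_rsum. Qed.

Lemma key_sym K x : Forall (fun a => (a < K)%nat) x ->
  rsum (usedA K x) (fun j => INR (nocc x j) * ln (INR (nocc x j)))
  - gsym K (fun k => lnfact (k - 1)) x
  - rsum (usedA K x) (fun j => 1/2 * ln (INR (nocc x j)))
  <= INR (length x) - cS * INR (msize K x).
Proof.
  intros Hx. rewrite !rsum_usedA, msize_rsum, (ncount K x Hx). unfold gsym.
  rewrite <- rsum_scal. unfold Rminus. rewrite <- !rsum_opp, <- !rsum_plus.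
  apply rsum_le. intros j _.
  destruct (nocc x j) as [|k] eqn:Ek.
  - replace (Nat.ltb 0 0) with false by reflexivity. simpl (0 - 1)%nat. rewrite lnfact_0. simpl INR. lra.
  - replace (Nat.ltb 0 (S k)) with true by reflexivity.
    assert (H := stirling (S k) ltac:(lia)). lra.
Qed.

Lemma rsum_zero_nonneg l f : (forall a, In a l -> 0 <= f a) -> rsum l f = 0 ->
  forall a, In a l -> f a = 0.
Proof.
  induction l as [|b l IH]; intros Hp Hs a Ha; [destruct Ha|].
  rewrite rsum_cons in Hs.
  assert (0 <= f b) by (apply Hp; simpl; auto).
  assert (0 <= rsum l f) by (rewrite <- (rsum_const0 l); apply rsum_le; intros; apply Hp; simpl; auto).
  destruct Ha as [->|Ha]. lra. apply IH; auto. intros; apply Hp; simpl; auto. lra.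
Qed.

Lemma all_new K x : Forall (fun a => (a < K)%nat) x -> msize K x = length x ->
  forall t, (t < length x)%nat -> cnt x t (sym x t) = 0%nat.
Proof.
  intros Hx Hm t Ht.
  assert (H1 := mcount K x Hx). rewrite Hm in H1.
  assert (H2 := rsum_seq_1 0 (length x)).
  unfold gstep in H1.
  assert (Hz : rsum (seq 0 (length x)) (fun t => 1 - ind (cnt x t (sym x t))) = 0).
  { unfold Rminus. rewrite rsum_plus, rsum_opp. lra. }
  assert (Hind : forall k, 0 <= 1 - ind k) by (intros k; unfold ind; destruct (Nat.eqb k 0); lra).
  assert (Hq := rsum_zero_nonneg _ _ (fun a _ => Hind _) Hz t ltac:(apply in_seq; lia)).
  unfold ind in Hq. destruct (cnt x t (sym x t)); auto. simpl in Hq. lra.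
Qed.

Lemma m_pos K x : Forall (fun a => (a < K)%nat) x -> (1 <= length x)%nat -> 1 <= INR (msize K x).
Proof.
  intros Hx Hn. rewrite (mcount K x Hx). unfold gstep.
  destruct (length x) as [|n] eqn:E; [lia|].
  simpl seq. rewrite rsum_cons.
  assert (cnt x 0 (sym x 0) = 0%nat) by reflexivity. rewrite H. unfold ind at 1. simpl Nat.eqb.
  assert (0 <= rsum (seq 1 n) (fun t => ind (cnt x t (sym x t)))).
  { rewrite <- (rsum_const0 (seq 1 n)). apply rsum_le. intros; unfold ind; destruct (Nat.eqb _ 0); lra. }
  lra.
Qed.

Theorem theorem4 (K : nat) (x : list nat) (w : nat -> nat -> R)
  (Hn : (1 <= length x)%nat)
  (Hx : Forall (fun a => (a < K)%nat) x)
  (Hw : valid_weights K x w) :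
  ((msize K x < length x)%nat ->
     redundancy K (INR (msize K x) / ln (INR (length x) / INR (msize K x))) w x
       <= theorem4_rhs K w x) /\
  (msize K x = length x ->
     redundancy_inf K w x <= theorem4_rhs K w x).
Proof.
  assert (Hkey := key_sym K x Hx).
  assert (Hf := fcount K x Hx).
  assert (HML := ML_eq K x Hn).
  assert (Hm1 := m_pos K x Hx Hn).
  split.
  - intros Hlt.
    set (nR := INR (length x)) in *. set (mR := INR (msize K x)) in *.
    assert (HmR : mR < nR) by (apply lt_INR; auto).
    assert (Hr1 : 1 < nR / mR) by (apply (Rmult_lt_reg_r mR); [lra|]; field_simplify; lra).
    assert (HL : 0 < ln (nR / mR)) by (rewrite <- ln_1; apply ln_increasing; lra).
    set (b := mR / ln (nR / mR)).
    assert (Hb : 0 < b) by (apply Rdiv_lt_0_compat; lra).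
    unfold redundancy. rewrite (lnS_eq K x w b Hx Hw Hb), HML. fold nR mR.
    assert (Htr := trapezoid (length x) b Hb). unfold Ttr in Htr. fold nR in Htr.
    assert (Hfin := final_real nR mR Hm1 HmR). cbv zeta in Hfin. fold b in Hfin.
    unfold theorem4_rhs. cbv zeta. fold nR mR.
    rewrite Hf.
    lra.
  - intros Heq.
    assert (Hnew := all_new K x Hx Heq).
    assert (Hpos : forall t, In t (seq 0 (length x)) -> 0 < S_inf_cond w x t (sym x t)
         /\ S_inf_cond w x t (sym x t) = w t (sym x t)).
    { intros t Ht. apply in_seq in Ht. unfold S_inf_cond. rewrite (Hnew t ltac:(lia)).
      replace (Nat.ltb 0 0) with false by reflexivity. split; auto.
      destruct (Hw t ltac:(lia)) as [Hp _]. apply Hp; auto. apply sym_lt; auto; lia. apply Hnew; lia. }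
    destruct (ln_rprod (seq 0 (length x)) (fun t => S_inf_cond w x t (sym x t))) as [_ Hln].
    { intros t Ht; apply Hpos; auto. }
    assert (HCL : CL w x = - rsum (seq 0 (length x)) (fun t => ln (S_inf_cond w x t (sym x t)))).
    { unfold CL. rewrite rsum_filter, <- rsum_opp. apply rsum_ext_in. intros t Ht.
      destruct (Hpos t Ht) as [Hp1 Hp2]. apply in_seq in Ht. rewrite (Hnew t ltac:(lia)). simpl Nat.eqb.
      rewrite Hp2 in *. unfold Rdiv. rewrite Rmult_1_l, ln_Rinv; auto. }
    assert (Hg0 : gstep Fln x = 0).
    { unfold gstep. rewrite <- (rsum_const0 (seq 0 (length x))). apply rsum_ext_in.
      intros t Ht. apply in_seq in Ht. rewrite (Hnew t ltac:(lia)). reflexivity. }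
    unfold redundancy_inf, S_inf. rewrite Hln, HML.
    unfold theorem4_rhs. cbv zeta. rewrite Heq.
    set (nR := INR (length x)) in *.
    assert (Hn0 : 0 < nR) by (unfold nR; apply lt_0_INR; lia).
    replace (exp 1 * nR / nR) with (exp 1) by (field; lra). rewrite ln_exp, ln_1.
    rewrite Heq in Hkey. fold nR in Hkey. rewrite <- Hf, Hg0 in Hkey.
    assert (HcS : 44/100 <= cS) by (unfold cS; generalize ln2_hi; lra).
    assert (0 <= nR) by lra.
    rewrite HCL. nra.
Qed.
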